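(* Let $k\in\{1,2,\dots\}\cup\{\infty\}$. (1) For every $C^k$-atlas $\mathcal{U}$ on $\mathbb{R}$ there exists a chain-like $C^k$-atlas $\mathcal{V}$ on $\mathbb{R}$ which is $C^k$-compatible with $\mathcal{U}$. (2) If $\mathcal{V}$ is a chain-like $C^k$-atlas on $\mathbb{R}$, then there exists a homeomorphism $\omega\colon\mathbb{R}\to\mathbb{R}$ such that the chart $(\mathbb{R},\omega)$ is $C^k$-compatible with $\mathcal{V}$.
   Context: Here $\mathbb{R}$ is regarded as a topological space. A chart on $\mathbb{R}$ is a homeomorphism $\varphi\colon U\to\varphi(U)$ of an open $U\subset\mathbb{R}$ onto an open subset of $\mathbb{R}$; charts $(U,\varphi),(V,\psi)$ are $C^k$-compatible if $U\cap V=\varnothing$ or $\psi\circ\varphi^{-1}\colon\varphi(U\cap V)\to\psi(U\cap V)$ is a $C^k$-diffeomorphism; a $C^k$-atlas is a family of pairwise compatible charts whose domains cover $\mathbb{R}$; a chart or atlas is $C^k$-compatible with an atlas if their union is a (partial) family of pairwise $C^k$-compatible charts. Two charts $(U,\varphi),(V,\psi)$ are $C^k$-joinable if they are $C^k$-compatible and there are reals $a<b<c<d$ with $\varphi(U)=(a,c)$, $\varphi(U\cap V)=\psi(U\cap V)=(b,c)$, $\psi(V)=(b,d)$. A countable $C^k$-atlas $\{(V_i,\psi_i)\}_{i\in\mathbb{Z}}$ on $\mathbb{R}$ is chain-like if for every $i\in\mathbb{Z}$: (G1) $(V_i,\psi_i)$ and $(V_{i+1},\psi_{i+1})$ are $C^k$-joinable,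 and (G2) $V_j\cap V_i\cap V_{i+1}=\varnothing$ for all $j\neq i,i+1$. *)

(* Defs.v *)
From Stdlib Require Import Reals ZArith.
From Coquelicot Require Import Coquelicot.
Open Scope R_scope.

(* Smoothness index k in {1,2,...} ∪ {∞}: [Some n] is n, [None] is ∞. *)
Definition smoothness := option nat.
Definition valid_smoothness (k : smoothness) : Prop :=
  match k with Some n => (1 <= n)%nat | None => True end.
Definition order_le (n : nat) (k : smoothness) : Prop :=
  match k with Some m => (n <= m)%nat | None => True end.

Definition img (f : R -> R) (A : R -> Prop) : R -> Prop :=
  fun y => exists x, A x /\ f x = y.
Definition inter (A B : R -> Prop) : R -> Prop := fun x => A x /\ B x.

Definition Ck_on (k : smoothness) (A : R -> Prop) (f : R -> R) : Prop :=
  forall n, order_le n k -> forall x, A x ->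
    ex_derive_n f n x /\ continuous (Derive_n f n) x.

Definition is_chart (U : R -> Prop) (phi : R -> R) : Prop :=
  open U /\
  (forall x y, U x -> U y -> phi x = phi y -> x = y) /\
  (forall x, U x -> continuous phi x) /\
  open (img phi U) /\
  (exists phiinv : R -> R,
      (forall x, U x -> phiinv (phi x) = x) /\
      (forall y, img phi U y -> continuous phiinv y)).

(* C^k-compatibility of two charts: U ∩ V = ∅, or the transition map
   psi ∘ phi^{-1} : phi(U∩V) -> psi(U∩V) is a C^k-diffeomorphism, i.e. it is
   (the restriction of) a C^k map g whose inverse is (the restriction of)
   a C^k map h. *)
Definition Ck_compatible (k : smoothness) (U : R -> Prop) (phi : R -> R)
    (V : R -> Prop) (psi : R -> R) : Prop :=
  (forall x, ~ (U x /\ V x)) \/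
  exists g h : R -> R,
    (forall x, U x -> V x -> g (phi x) = psi x) /\
    (forall x, U x -> V x -> h (psi x) = phi x) /\
    Ck_on k (img phi (inter U V)) g /\
    Ck_on k (img psi (inter U V)) h.

Definition Ck_atlas (k : smoothness) (I : Type) (U : I -> R -> Prop)
    (phi : I -> R -> R) : Prop :=
  (forall i, is_chart (U i) (phi i)) /\
  (forall i j, Ck_compatible k (U i) (phi i) (U j) (phi j)) /\
  (forall x, exists i, U i x).

(* Two atlases are C^k-compatible: their union is pairwise compatible
   (within each atlas this already holds, so it amounts to cross-compatibility). *)
Definition atlases_compatible (k : smoothness)
    (I : Type) (U : I -> R -> Prop) (phi : I -> R -> R)
    (J : Type) (V : J -> R -> Prop) (psi : J -> R -> R) : Prop :=
  forall i j, Ck_compatible k (U i) (phi i) (V j) (psi j) /\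
              Ck_compatible k (V j) (psi j) (U i) (phi i).

Definition set_eq (A B : R -> Prop) : Prop := forall x, A x <-> B x.
Definition open_itv (a b : R) : R -> Prop := fun y => a < y < b.

Definition Ck_joinable (k : smoothness) (U : R -> Prop) (phi : R -> R)
    (V : R -> Prop) (psi : R -> R) : Prop :=
  Ck_compatible k U phi V psi /\
  exists a b c d : R, a < b /\ b < c /\ c < d /\
    set_eq (img phi U) (open_itv a c) /\
    set_eq (img phi (inter U V)) (open_itv b c) /\
    set_eq (img psi (inter U V)) (open_itv b c) /\
    set_eq (img psi V) (open_itv b d).

Definition chain_like (k : smoothness) (V : Z -> R -> Prop)
    (psi : Z -> R -> R) : Prop :=
  Ck_atlas k Z V psi /\
  (forall i : Z, Ck_joinable k (V i) (psi i) (V (i + 1)%Z) (psi (i + 1)%Z)) /\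
  (forall i j : Z, j <> i -> j <> (i + 1)%Z ->
     forall x, ~ (V j x /\ V i x /\ V (i + 1)%Z x)).

Definition homeomorphism (w : R -> R) : Prop :=
  (forall x, continuous w x) /\
  exists winv : R -> R,
    (forall x, winv (w x) = x) /\ (forall y, w (winv y) = y) /\
    (forall y, continuous winv y).

(* Main.v *)
Require Import Defs.
From Stdlib Require Import Reals ZArith.
From Coquelicot Require Import Coquelicot.
From Stdlib Require Import Lra Lia FunctionalExtensionality ClassicalEpsilon Classical.
Open Scope R_scope.
Notation ropen := (@open R_UniformSpace).

Lemma ball_R x e y : ball x e y <-> Rabs (y - x) < e.
Proof. unfold ball; simpl. unfold AbsRing_ball, abs, minus, plus, opp; simpl. tauto. Qed.

Lemma locally_eps x (P : R -> Prop) :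
  locally x P <-> exists e, 0 < e /\ forall y, Rabs (y - x) < e -> P y.
Proof.
  split.
  - intros [e He]. exists e. split; [apply cond_pos|]. intros y Hy. apply He, ball_R; auto.
  - intros [e [He H]]. exists (mkposreal e He). intros y Hy. apply H, ball_R, Hy.
Qed.

Lemma open_eps (A : R -> Prop) :
  ropen A <-> forall x, A x -> exists e, 0 < e /\ forall y, Rabs (y - x) < e -> A y.
Proof.
  split.
  - intros H x Hx. apply locally_eps, H, Hx.
  - intros H x Hx. apply locally_eps, H, Hx.
Qed.

Lemma cont_eps f x : continuous f x ->
  forall e, 0 < e -> exists d, 0 < d /\ forall y, Rabs (y - x) < d -> Rabs (f y - f x) < e.
Proof.
  intros H e He.
  assert (H2 := proj1 (filterlim_locally f (f x)) H (mkposreal e He)).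
  apply locally_eps in H2. destruct H2 as [d [Hd H2]]. exists d. split; [exact Hd|].
  intros y Hy. apply ball_R. apply H2, Hy.
Qed.

Lemma eps_cont f x : (forall e, 0 < e -> exists d, 0 < d /\ forall y, Rabs (y - x) < d -> Rabs (f y - f x) < e) -> continuous f x.
Proof.
  intros H. apply filterlim_locally. intros [e He]. apply locally_eps.
  destruct (H e He) as [d [Hd H2]]. exists d; split; [exact Hd|]. intros y Hy. apply ball_R. apply H2, Hy.
Qed.

Lemma open_ball x e : ropen (fun y => Rabs (y - x) < e).
Proof.
  apply open_eps. intros y Hy. exists (e - Rabs (y - x)). split. lra.
  intros z Hz. pose proof (Rabs_triang (z - y) (y - x)). replace (z - y + (y - x)) with (z - x) in H by ring. lra.
Qed.

Lemma open_and (A B : R -> Prop) : ropen A -> ropen B -> ropen (fun x => A x /\ B x).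
Proof.
  intros HA HB. apply open_eps. intros x [Ax Bx].
  pose proof (proj1 (open_eps A) HA) as HA0; clear HA; rename HA0 into HA. pose proof (proj1 (open_eps B) HB) as HB0; clear HB; rename HB0 into HB.
  destruct (HA x Ax) as [e1 [He1 H1]]. destruct (HB x Bx) as [e2 [He2 H2]].
  exists (Rmin e1 e2). split. apply Rmin_pos; auto.
  intros y Hy. split; [apply H1|apply H2]; pose proof (Rmin_l e1 e2); pose proof (Rmin_r e1 e2); lra.
Qed.

Lemma open_true : ropen (fun _ : R => True).
Proof. apply open_eps. intros. exists 1. split; auto; lra. Qed.

Lemma Derive_n_S f n : Derive_n f (S n) = Derive_n (Derive f) n.
Proof.
  induction n.
  - reflexivity.
  - apply functional_extensionality. intro x.
    change (Derive (Derive_n f (S n)) x = Derive (Derive_n (Derive f) n) x). rewrite IHn. reflexivity.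
Qed.

Lemma ex_derive_n_SS f n x : ex_derive_n f (S (S n)) x <-> ex_derive_n (Derive f) (S n) x.
Proof.
  simpl ex_derive_n. change (Derive (Derive_n f n)) with (Derive_n f (S n)).
  rewrite Derive_n_S. tauto.
Qed.

Lemma Ck_on_0 A f : Ck_on (Some 0%nat) A f <-> forall x, A x -> continuous f x.
Proof.
  split.
  - intros H x Hx. destruct (H 0%nat (le_n 0) x Hx) as [_ H2]. exact H2.
  - intros H n Hn x Hx. simpl in Hn. assert (n = 0%nat) by lia. subst. split. exact I. apply H, Hx.
Qed.

Lemma Ck_on_S A n f : Ck_on (Some (S n)) A f <->
  (forall x, A x -> ex_derive f x) /\ Ck_on (Some n) A (Derive f).
Proof.
  split.
  - intros H. split.
    + intros x Hx. destruct (H 1%nat ltac:(simpl; lia) x Hx) as [H1 _]. exact H1.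
    + intros m Hm x Hx. simpl in Hm. destruct (H (S m) ltac:(simpl; lia) x Hx) as [H1 H2].
      split.
      * destruct m. exact I. exact (proj1 (ex_derive_n_SS f m x) H1).
      * rewrite <- Derive_n_S. exact H2.
  - intros [H1 H2] m Hm x Hx. simpl in Hm. destruct m.
    + split. exact I. exact (ex_derive_continuous f x (H1 x Hx)).
    + destruct (H2 m ltac:(simpl; lia) x Hx) as [H3 H4]. split.
      * destruct m. simpl. apply H1, Hx. exact (proj2 (ex_derive_n_SS f m x) H3).
      * rewrite Derive_n_S. exact H4.
Qed.

Lemma Ck_on_k_iff k A f : Ck_on k A f <-> forall n, order_le n k -> Ck_on (Some n) A f.
Proof.
  split.
  - intros H n Hn m Hm x Hx. apply H; auto. destruct k; simpl in *; lia.
  - intros H n Hn x Hx. apply (H n Hn n); simpl; auto.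
Qed.

Lemma Ck_on_mono k A B f : (forall x, B x -> A x) -> Ck_on k A f -> Ck_on k B f.
Proof. intros HBA H n Hn x Hx. apply H; auto. Qed.

Lemma Ck_on_Sn_n A n f : Ck_on (Some (S n)) A f -> Ck_on (Some n) A f.
Proof. intros H m Hm. apply H. simpl in *; lia. Qed.

Lemma Ck_on_ext k A f g : ropen A -> (forall x, A x -> f x = g x) -> Ck_on k A f -> Ck_on k A g.
Proof.
  intros HA Heq H n Hn x Hx. destruct (H n Hn x Hx) as [H1 H2].
  pose proof (proj1 (open_eps A) HA) as HA0; clear HA; rename HA0 into HA.
  assert (Hloc : forall y, A y -> locally y (fun t => f t = g t)).
  { intros y Hy. apply locally_eps. destruct (HA y Hy) as [e [He He2]]. exists e. split; [assumption|].
    intros z Hz. apply Heq, He2, Hz. }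
  split.
  - apply (ex_derive_n_ext_loc f g n x (Hloc x Hx)). exact H1.
  - apply (continuous_ext_loc _ (Derive_n f n)).
    + apply locally_eps. destruct (HA x Hx) as [e [He He2]]. exists e. split; [assumption|].
      intros z Hz. apply Derive_n_ext_loc. apply Hloc. apply He2, Hz.
    + exact H2.
Qed.

Lemma exd_plus (f g : R -> R) x : ex_derive f x -> ex_derive g x -> ex_derive (fun y => f y + g y) x.
Proof. intros. exact (ex_derive_plus f g x H H0). Qed.
Lemma exd_mult (f g : R -> R) x : ex_derive f x -> ex_derive g x -> ex_derive (fun y => f y * g y) x.
Proof. intros. exact (ex_derive_mult f g x H H0). Qed.
Lemma exd_const (c : R) x : ex_derive (fun _ : R => c) x.
Proof. exact (ex_derive_const c x). Qed.
Lemma exd_id x : ex_derive (fun y : R => y) x.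
Proof. exact (ex_derive_id x). Qed.
Lemma exd_comp (f g : R -> R) x : ex_derive f (g x) -> ex_derive g x -> ex_derive (fun y => f (g y)) x.
Proof. intros. exact (ex_derive_comp f g x H H0). Qed.
Lemma exd_cont (f : R -> R) x : ex_derive f x -> continuous f x.
Proof. intros. exact (ex_derive_continuous f x H). Qed.
Lemma cont_plus (f g : R -> R) x : continuous f x -> continuous g x -> continuous (fun y => f y + g y) x.
Proof. intros. exact (continuous_plus f g x H H0). Qed.
Lemma cont_mult (f g : R -> R) x : continuous f x -> continuous g x -> continuous (fun y => f y * g y) x.
Proof. intros. exact (continuous_mult f g x H H0). Qed.
Lemma cont_const (c : R) x : continuous (fun _ : R => c) x.
Proof. exact (continuous_const c x). Qed.
Lemma cont_id x : continuous (fun y : R => y) x.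
Proof. exact (continuous_id x). Qed.
Lemma cont_comp (f g : R -> R) x : continuous g x -> continuous f (g x) -> continuous (fun y => f (g y)) x.
Proof. intros. exact (continuous_comp g f x H H0). Qed.

Lemma Cn_const n A c : Ck_on (Some n) A (fun _ => c).
Proof.
  revert c. induction n; intros c.
  - apply Ck_on_0. intros. apply cont_const.
  - apply Ck_on_S. split. intros; apply exd_const.
    replace (Derive (fun _ : R => c)) with (fun _ : R => 0). apply IHn.
    apply functional_extensionality. intros x. rewrite Derive_const. auto.
Qed.

Lemma Cn_id n A : Ck_on (Some n) A (fun x => x).
Proof.
  destruct n.
  - apply Ck_on_0. intros. apply cont_id.
  - apply Ck_on_S. split. intros; apply exd_id.
    replace (Derive (fun x : R => x)) with (fun _ : R => 1). apply Cn_const.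
    apply functional_extensionality. intros x. rewrite Derive_id. auto.
Qed.

Lemma Cn_plus n A f g : ropen A -> Ck_on (Some n) A f -> Ck_on (Some n) A g ->
  Ck_on (Some n) A (fun x => f x + g x).
Proof.
  intros HA. revert f g. induction n; intros f g Hf Hg.
  - apply Ck_on_0. intros x Hx. apply cont_plus; [apply (proj1 (Ck_on_0 A f) Hf)|apply (proj1 (Ck_on_0 A g) Hg)]; auto.
  - apply Ck_on_S in Hf. apply Ck_on_S in Hg. destruct Hf as [Hf1 Hf2]. destruct Hg as [Hg1 Hg2].
    apply Ck_on_S. split. intros; apply exd_plus; auto.
    apply (Ck_on_ext _ A (fun x => Derive f x + Derive g x)); auto.
    intros x Hx. rewrite Derive_plus; auto.
Qed.

Lemma Cn_mult n A f g : ropen A -> Ck_on (Some n) A f -> Ck_on (Some n) A g ->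
  Ck_on (Some n) A (fun x => f x * g x).
Proof.
  intros HA. revert f g. induction n; intros f g Hf Hg.
  - apply Ck_on_0. intros x Hx. apply cont_mult; [apply (proj1 (Ck_on_0 A f) Hf)|apply (proj1 (Ck_on_0 A g) Hg)]; auto.
  - pose proof (Ck_on_Sn_n _ _ _ Hf) as Hf0. pose proof (Ck_on_Sn_n _ _ _ Hg) as Hg0.
    apply Ck_on_S in Hf. apply Ck_on_S in Hg. destruct Hf as [Hf1 Hf2]. destruct Hg as [Hg1 Hg2].
    apply Ck_on_S. split. intros; apply exd_mult; auto.
    apply (Ck_on_ext _ A (fun x => Derive f x * g x + f x * Derive g x)); auto.
    + intros x Hx. rewrite Derive_mult; auto.
    + apply Cn_plus; auto.
Qed.

Lemma Cn_comp n A B f g : ropen A -> ropen B -> (forall x, A x -> B (f x)) ->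
  Ck_on (Some n) A f -> Ck_on (Some n) B g -> Ck_on (Some n) A (fun x => g (f x)).
Proof.
  intros HA HB HAB. revert f g HAB. induction n; intros f g HAB Hf Hg.
  - apply Ck_on_0. intros x Hx. apply cont_comp.
    apply (proj1 (Ck_on_0 A f) Hf); auto. apply (proj1 (Ck_on_0 B g) Hg); auto.
  - pose proof (Ck_on_Sn_n _ _ _ Hf) as Hf0.
    apply Ck_on_S in Hf. apply Ck_on_S in Hg. destruct Hf as [Hf1 Hf2]. destruct Hg as [Hg1 Hg2].
    apply Ck_on_S. split. intros; apply exd_comp; auto.
    apply (Ck_on_ext _ A (fun x => Derive f x * Derive g (f x))).
    + exact HA.
    + intros x Hx. rewrite (Derive_comp g f x); auto.
    + apply Cn_mult. exact HA. exact Hf2. apply IHn; auto.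
Qed.

Lemma Cn_inv n A f : ropen A -> (forall x, A x -> f x <> 0) -> Ck_on (Some n) A f ->
  Ck_on (Some n) A (fun x => / f x).
Proof.
  intros HA Hnz. revert f Hnz. induction n; intros f Hnz Hf.
  - apply Ck_on_0. intros x Hx. apply continuous_Rinv_comp; auto. apply (proj1 (Ck_on_0 A f) Hf); auto.
  - pose proof (Ck_on_Sn_n _ _ _ Hf) as Hf0.
    apply Ck_on_S in Hf. destruct Hf as [Hf1 Hf2].
    apply Ck_on_S. split. intros; apply ex_derive_inv; auto.
    apply (Ck_on_ext _ A (fun x => (-1) * Derive f x * (/ f x * / f x))); auto.
    + intros x Hx. rewrite Derive_inv; auto. field. auto.
    + apply Cn_mult; auto. apply Cn_mult; auto. apply Cn_const. apply Cn_mult; auto.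
Qed.

Lemma Ck_to_n k A f n : Ck_on k A f -> order_le n k -> Ck_on (Some n) A f.
Proof. intros H Hn. exact (proj1 (Ck_on_k_iff k A f) H n Hn). Qed.
Lemma Ck_of_n k A f : (forall n, order_le n k -> Ck_on (Some n) A f) -> Ck_on k A f.
Proof. intros H. exact (proj2 (Ck_on_k_iff k A f) H). Qed.
Lemma Ck_const k A c : Ck_on k A (fun _ => c).
Proof. apply Ck_of_n. intros; apply Cn_const. Qed.
Lemma Ck_id k A : Ck_on k A (fun x => x).
Proof. apply Ck_of_n. intros; apply Cn_id. Qed.
Lemma Ck_plus k A f g : ropen A -> Ck_on k A f -> Ck_on k A g -> Ck_on k A (fun x => f x + g x).
Proof. intros HA Hf Hg. apply Ck_of_n. intros n Hn. apply Cn_plus; auto; eapply Ck_to_n; eauto. Qed.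
Lemma Ck_mult k A f g : ropen A -> Ck_on k A f -> Ck_on k A g -> Ck_on k A (fun x => f x * g x).
Proof. intros HA Hf Hg. apply Ck_of_n. intros n Hn. apply Cn_mult; auto; eapply Ck_to_n; eauto. Qed.
Lemma Ck_comp k A B f g : ropen A -> ropen B -> (forall x, A x -> B (f x)) ->
  Ck_on k A f -> Ck_on k B g -> Ck_on k A (fun x => g (f x)).
Proof. intros HA HB HAB Hf Hg. apply Ck_of_n. intros n Hn. apply (Cn_comp n A B); auto; eapply Ck_to_n; eauto. Qed.
Lemma Ck_inv k A f : ropen A -> (forall x, A x -> f x <> 0) -> Ck_on k A f -> Ck_on k A (fun x => / f x).
Proof. intros HA Hnz Hf. apply Ck_of_n. intros n Hn. apply Cn_inv; auto; eapply Ck_to_n; eauto. Qed.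

Lemma recip_close l q e : l <> 0 -> 0 < e -> Rabs (q - l) < Rmin (Rabs l / 2) (e * (Rabs l * Rabs l) / 2) ->
  Rabs (/ q - / l) < e.
Proof.
  intros Hl He H.
  pose proof (Rmin_l (Rabs l / 2) (e * (Rabs l * Rabs l) / 2)).
  pose proof (Rmin_r (Rabs l / 2) (e * (Rabs l * Rabs l) / 2)).
  assert (Ha : 0 < Rabs l) by (apply Rabs_pos_lt; auto).
  assert (Hb : Rabs l / 2 < Rabs q).
  { pose proof (Rabs_triang_inv l q). rewrite Rabs_minus_sym in H. lra. }
  assert (Hq : q <> 0). { intro. subst. rewrite Rabs_R0 in Hb. lra. }
  replace (/ q - / l) with ((l - q) / (q * l)) by (field; auto).
  unfold Rdiv. rewrite Rabs_mult, Rabs_inv, Rabs_mult.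
  rewrite Rabs_minus_sym.
  assert (Hql : 0 < Rabs q * Rabs l) by (apply Rmult_lt_0_compat; lra).
  apply (Rmult_lt_reg_r (Rabs q * Rabs l)). exact Hql.
  rewrite Rmult_assoc, Rinv_l by lra.
  assert (0 < e * ((Rabs q - Rabs l / 2) * Rabs l)) by (apply Rmult_lt_0_compat; [lra|apply Rmult_lt_0_compat; lra]).
  assert (e * (Rabs q * Rabs l) = e * ((Rabs q - Rabs l/2) * Rabs l) + e * (Rabs l * Rabs l)/2) by field.
  lra.
Qed.

Lemma inv_derive (f g : R -> R) t0 l : is_derive f (g t0) l -> l <> 0 -> continuous g t0 ->
  (exists d, 0 < d /\ forall t, Rabs (t - t0) < d -> f (g t) = t) -> is_derive g t0 (/ l).
Proof.
  intros Hf Hl Hg [d0 [Hd0 Hid]].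
  apply is_derive_Reals in Hf. apply is_derive_Reals.
  intros e He.
  assert (He' : 0 < Rmin (Rabs l / 2) (e * (Rabs l * Rabs l) / 2)).
  { apply Rmin_pos. pose proof (Rabs_pos_lt l Hl); lra.
    pose proof (Rabs_pos_lt l Hl). apply Rmult_lt_0_compat; [|lra]. apply Rmult_lt_0_compat; nra. }
  destruct (Hf _ He') as [eta Heta].
  destruct (cont_eps g t0 Hg eta (cond_pos eta)) as [d1 [Hd1 Hc]].
  assert (Hd : 0 < Rmin d0 d1) by (apply Rmin_pos; auto).
  exists (mkposreal _ Hd). intros h Hh Hhd. simpl in Hhd.
  pose proof (Rmin_l d0 d1). pose proof (Rmin_r d0 d1).
  set (k := g (t0 + h) - g t0).
  assert (Hk1 : Rabs k < eta). { apply Hc. replace (t0 + h - t0) with h by ring. lra. }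
  assert (E1 : f (g (t0 + h)) = t0 + h). { apply Hid. replace (t0 + h - t0) with h by ring. lra. }
  assert (E0 : f (g t0) = t0). { apply Hid. replace (t0 - t0) with 0 by ring. rewrite Rabs_R0. lra. }
  assert (Hk0 : k <> 0). { intro Hk. unfold k in Hk. assert (g (t0 + h) = g t0) by lra.
    rewrite H1 in E1. lra. }
  specialize (Heta k Hk0 Hk1).
  replace (g t0 + k) with (g (t0 + h)) in Heta by (unfold k; ring).
  rewrite E1, E0 in Heta. replace (t0 + h - t0) with h in Heta by ring.
  replace (k / h) with (/ (h / k)) by (field; auto).
  apply recip_close; auto.
Qed.

Lemma Cn_le n m A f : Ck_on (Some n) A f -> (m <= n)%nat -> Ck_on (Some m) A f.
Proof. intros H Hm p Hp. apply H. simpl in *; lia. Qed.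

Lemma Cn_inverse n A B f g : ropen A -> ropen B ->
  (forall t, B t -> A (g t) /\ f (g t) = t) -> (forall t, B t -> continuous g t) ->
  Ck_on (Some (S n)) A f -> (forall s, A s -> Derive f s <> 0) -> Ck_on (Some (S n)) B g.
Proof.
  intros HA HB Hinv Hgc Hf Hnz.
  pose proof Hf as Hf'. apply Ck_on_S in Hf'. destruct Hf' as [Hf1 Hf2].
  assert (Hder : forall t, B t -> is_derive g t (/ Derive f (g t))).
  { intros t Ht. destruct (Hinv t Ht) as [HAg _]. apply (inv_derive f g).
    apply Derive_correct. apply Hf1; auto. apply Hnz; auto. apply Hgc; auto.
    destruct (proj1 (open_eps B) HB t Ht) as [d [Hd Hd2]]. exists d. split; [exact Hd|].
    intros t' Ht'. apply Hinv. apply Hd2; auto. }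
  assert (forall m, (m <= S n)%nat -> Ck_on (Some m) B g).
  { induction m; intros Hm.
    - apply (proj2 (Ck_on_0 B g)). auto.
    - apply Ck_on_S. split.
      + intros t Ht. exists (/ Derive f (g t)). apply Hder; auto.
      + apply (Ck_on_ext _ B (fun t => / Derive f (g t))). exact HB.
        * intros t Ht. symmetry. apply is_derive_unique. apply Hder; auto.
        * apply Cn_inv. exact HB. intros t Ht. apply Hnz. apply Hinv; auto.
          apply (Cn_comp m B A g (Derive f)); auto.
          intros t Ht; apply Hinv; auto. apply IHm. lia.
          apply (Cn_le n). auto. lia. }
  apply H. lia.
Qed.

Lemma Ck_inverse k A B f g : order_le 1 k -> ropen A -> ropen B ->
  (forall t, B t -> A (g t) /\ f (g t) = t) -> (forall t, B t -> continuous g t) ->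
  Ck_on k A f -> (forall s, A s -> Derive f s <> 0) -> Ck_on k B g.
Proof.
  intros Hk HA HB Hinv Hgc Hf Hnz. apply Ck_of_n. intros n Hn.
  destruct n.
  - apply (proj2 (Ck_on_0 B g)). auto.
  - apply (Cn_inverse n A B f g); auto. eapply Ck_to_n; eauto.
Qed.

Lemma isd_plus (f g : R -> R) x df dg : is_derive f x df -> is_derive g x dg -> is_derive (fun y => f y + g y) x (df + dg).
Proof. intros. exact (is_derive_plus f g x df dg H H0). Qed.
Lemma isd_comp (f g : R -> R) x df dg : is_derive f (g x) df -> is_derive g x dg -> is_derive (fun y => f (g y)) x (dg * df).
Proof. intros. exact (is_derive_comp f g x df dg H H0). Qed.
Lemma isd_const (c : R) x : is_derive (fun _ => c) x 0.
Proof. exact (is_derive_const c x). Qed.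
Lemma isd_id x : is_derive (fun y : R => y) x 1.
Proof. exact (is_derive_id x). Qed.

Inductive ispoly : (R -> R) -> Prop :=
| ip_c c : ispoly (fun _ => c)
| ip_x : ispoly (fun u => u)
| ip_add p q : ispoly p -> ispoly q -> ispoly (fun u => p u + q u)
| ip_mul p q : ispoly p -> ispoly q -> ispoly (fun u => p u * q u).

Lemma poly_deriv p : ispoly p -> exists p', ispoly p' /\ forall u, is_derive p u (p' u).
Proof.
  induction 1.
  - exists (fun _ => 0). split. constructor. intros; apply isd_const.
  - exists (fun _ => 1). split. constructor. intros; apply isd_id.
  - destruct IHispoly1 as [p' [H1 H2]]. destruct IHispoly2 as [q' [H3 H4]].
    exists (fun u => p' u + q' u). split. constructor; auto. intros; apply isd_plus; auto.
  - destruct IHispoly1 as [p' [H1 H2]]. destruct IHispoly2 as [q' [H3 H4]].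
    exists (fun u => p' u * q u + p u * q' u). split. repeat constructor; auto.
    intros; apply Derive.is_derive_mult; auto.
Qed.

Lemma poly_bound p : ispoly p -> exists C m, 0 <= C /\ forall u, 1 <= u -> Rabs (p u) <= C * u ^ m.
Proof.
  induction 1.
  - exists (Rabs c), 0%nat. split. apply Rabs_pos. intros. simpl. lra.
  - exists 1, 1%nat. split. lra. intros. simpl. rewrite Rabs_right by lra. lra.
  - destruct IHispoly1 as [C1 [m1 [HC1 H1]]]. destruct IHispoly2 as [C2 [m2 [HC2 H2]]].
    exists (C1 + C2), (m1 + m2)%nat. split. lra. intros u Hu.
    pose proof (Rle_pow u m1 (m1+m2) Hu ltac:(lia)). pose proof (Rle_pow u m2 (m1+m2) Hu ltac:(lia)).
    pose proof (Rabs_triang (p u) (q u)). specialize (H1 u Hu). specialize (H2 u Hu).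
    assert (C1 * u ^ m1 <= C1 * u ^ (m1 + m2)) by (apply Rmult_le_compat_l; auto).
    assert (C2 * u ^ m2 <= C2 * u ^ (m1 + m2)) by (apply Rmult_le_compat_l; auto).
    lra.
  - destruct IHispoly1 as [C1 [m1 [HC1 H1]]]. destruct IHispoly2 as [C2 [m2 [HC2 H2]]].
    exists (C1 * C2), (m1 + m2)%nat. split. apply Rmult_le_pos; auto. intros u Hu.
    rewrite Rabs_mult, pow_add. specialize (H1 u Hu). specialize (H2 u Hu).
    replace (C1 * C2 * (u ^ m1 * u ^ m2)) with ((C1 * u ^ m1) * (C2 * u ^ m2)) by ring.
    apply Rmult_le_compat; auto; apply Rabs_pos.
Qed.

Lemma exp_ge_lin x : x <= exp x.
Proof.
  destruct (Req_dec x 0). subst. rewrite exp_0. lra.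
  pose proof (exp_ineq1 x H). lra.
Qed.

Lemma exp_nat n v : exp (INR n * v) = exp v ^ n.
Proof.
  induction n. simpl. rewrite Rmult_0_l. apply exp_0.
  rewrite S_INR. replace ((INR n + 1) * v) with (INR n * v + v) by ring.
  rewrite exp_plus, IHn. simpl. ring.
Qed.

Lemma exp_pow_bound m u : 0 <= u -> u ^ (S m) <= INR (S m) ^ (S m) * exp u.
Proof.
  intros Hu. set (M := INR (S m)).
  assert (HM : 0 < M) by (unfold M; apply lt_0_INR; lia).
  assert (E : exp u = exp (u / M) ^ (S m)).
  { rewrite <- exp_nat. f_equal. unfold M. field. apply Rgt_not_eq. apply lt_0_INR. lia. }
  assert (H1 : (u / M) ^ (S m) <= exp (u / M) ^ (S m)).
  { apply pow_incr. split. apply Rdiv_le_0_compat; lra. apply exp_ge_lin. }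
  rewrite E. replace (u ^ (S m)) with (M ^ (S m) * (u / M) ^ (S m)).
  apply Rmult_le_compat_l. apply pow_le; lra. exact H1.
  rewrite <- Rpow_mult_distr. f_equal. field. lra.
Qed.

Lemma key_bound C m : 0 <= C -> exists K, 0 <= K /\
  forall t, 0 < t <= 1 -> C * (/ t) ^ m * exp (- / t) <= K * t.
Proof.
  intros HC. exists (C * INR (S m) ^ (S m)). split.
  apply Rmult_le_pos; auto. apply pow_le. apply pos_INR.
  intros t Ht. set (u := / t).
  assert (Hu : 1 <= u). { unfold u. rewrite <- Rinv_1. apply Rinv_le_contravar; lra. }
  assert (Htu : t * u = 1) by (unfold u; field; lra).
  pose proof (exp_pow_bound m u ltac:(lra)) as H.
  rewrite exp_Ropp. pose proof (exp_pos u).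
  apply (Rmult_le_reg_r (exp u * u)). apply Rmult_lt_0_compat; lra.
  replace (C * u ^ m * / exp u * (exp u * u)) with (C * u ^ (S m)) by (simpl; field; lra).
  replace (C * INR (S m) ^ (S m) * t * (exp u * u)) with (C * (INR (S m) ^ (S m) * exp u)).
  apply Rmult_le_compat_l; auto.
  replace (C * INR (S m) ^ (S m) * t * (exp u * u)) with (C * INR (S m) ^ (S m) * exp u * (t * u)) by ring.
  rewrite Htu. ring.
Qed.

Definition Hf (p : R -> R) (t : R) : R := if Rle_dec t 0 then 0 else p (/ t) * exp (- / t).

Lemma H_bound p : ispoly p -> exists K, 0 <= K /\ forall t, 0 < t <= 1 -> Rabs (Hf p t) <= K * t.
Proof.
  intros Hp. destruct (poly_bound p Hp) as [C [m [HC Hb]]].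
  destruct (key_bound C m HC) as [K [HK HKb]]. exists K. split; auto.
  intros t Ht. unfold Hf. destruct (Rle_dec t 0). lra.
  rewrite Rabs_mult, (Rabs_right (exp _)) by (apply Rle_ge, Rlt_le, exp_pos).
  eapply Rle_trans; [|apply HKb; auto].
  apply Rmult_le_compat_r. apply Rlt_le, exp_pos.
  apply Hb. rewrite <- Rinv_1. apply Rinv_le_contravar; lra.
Qed.

Lemma H_deriv p : ispoly p -> exists q, ispoly q /\ forall t, is_derive (Hf p) t (Hf q t).
Proof.
  intros Hp. destruct (poly_deriv p Hp) as [p' [Hp' Hd]].
  exists (fun u => u * u * (p u + (-1) * p' u)). split.
  { repeat constructor; auto. }
  intros t. destruct (Rtotal_order t 0) as [Hlt|[Heq|Hgt]].
  - apply (is_derive_ext_loc (fun _ => 0)).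
    + apply locally_eps. exists (- t). split. lra. intros y Hy. unfold Hf.
      destruct (Rle_dec y 0); auto. exfalso. apply Rabs_def2 in Hy. lra.
    + unfold Hf. destruct (Rle_dec t 0). apply isd_const. lra.
  - subst t. apply is_derive_Reals. intros e He.
    destruct (H_bound (fun u => u * p u) ltac:(constructor; auto; constructor)) as [K [HK HKb]].
    assert (Hd0 : 0 < Rmin 1 (e / (K + 1))).
    { apply Rmin_pos. lra. apply Rdiv_lt_0_compat; lra. }
    exists (mkposreal _ Hd0). intros h Hh Hhd. simpl in Hhd.
    pose proof (Rmin_l 1 (e / (K + 1))). pose proof (Rmin_r 1 (e / (K + 1))).
    assert (E0 : Hf p 0 = 0) by (unfold Hf; destruct (Rle_dec 0 0); lra).
    assert (E1 : Hf (fun u => u * u * (p u + -1 * p' u)) 0 = 0) by (unfold Hf; destruct (Rle_dec 0 0); lra).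
    rewrite E0, E1.
    replace (0 + h) with h by ring.
    destruct (Rle_dec h 0).
    + assert (E2 : Hf p h = 0) by (unfold Hf; destruct (Rle_dec h 0); lra).
      rewrite E2. replace ((0 - 0) / h - 0) with 0 by (field; auto). rewrite Rabs_R0. auto.
    + assert (Hh0 : 0 < h) by lra.
      specialize (HKb h ltac:(split; [lra|apply Rabs_def2 in Hhd; lra])).
      unfold Hf in HKb |- *. destruct (Rle_dec h 0); [lra|].
      replace ((p (/ h) * exp (- / h) - 0) / h - 0) with (/ h * p (/ h) * exp (- / h)) by (field; lra).
      eapply Rle_lt_trans. apply HKb.
      apply Rabs_def2 in Hhd.
      assert (h < e / (K + 1)) by lra.
      apply (Rmult_lt_reg_r (K + 1)). lra.
      unfold Rdiv in H1. apply (Rmult_lt_compat_r (K + 1)) in H1; [|lra].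
      rewrite Rmult_assoc, Rinv_l in H1 by lra. nra.
  - apply (is_derive_ext_loc (fun y => p (/ y) * exp (- / y))).
    + apply locally_eps. exists t. split. lra. intros y Hy. unfold Hf.
      destruct (Rle_dec y 0); auto. exfalso. apply Rabs_def2 in Hy. lra.
    + unfold Hf. destruct (Rle_dec t 0). lra.
      auto_derive. split. exists (p' (/ t)). apply Hd. split. lra. split. lra. exact I.
      replace (Derive (fun x : R => p x) (/ t)) with (p' (/ t)).
      field. lra.
      symmetry. apply is_derive_unique. apply Hd.
Qed.

Definition psi0 := Hf (fun _ => 1).

Lemma psi_derivs n : exists p, ispoly p /\ Derive_n psi0 n = Hf p /\ forall t, ex_derive_n psi0 n t.
Proof.
  induction n.
  - exists (fun _ => 1). split. constructor. split. reflexivity. intros; exact I.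
  - destruct IHn as [p [Hp [E Hex]]]. destruct (H_deriv p Hp) as [q [Hq Hd]].
    exists q. split; auto. split.
    + apply functional_extensionality. intros x. change (Derive (Derive_n psi0 n) x = Hf q x).
      rewrite E. apply is_derive_unique. apply Hd.
    + intros t. change (ex_derive (Derive_n psi0 n) t). rewrite E. exists (Hf q t). apply Hd.
Qed.

Lemma psi_Ck k A : Ck_on k A psi0.
Proof.
  intros n Hn x Hx. destruct (psi_derivs n) as [p [Hp [E Hex]]]. split. apply Hex.
  rewrite E. apply exd_cont. destruct (H_deriv p Hp) as [q [Hq Hd]]. exists (Hf q x). apply Hd.
Qed.

Lemma psi_le0 t : t <= 0 -> psi0 t = 0.
Proof. intros. unfold psi0, Hf. destruct (Rle_dec t 0); lra. Qed.
Lemma psi_pos t : 0 < t -> 0 < psi0 t.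
Proof. intros. unfold psi0, Hf. destruct (Rle_dec t 0). lra. rewrite Rmult_1_l. apply exp_pos. Qed.
Lemma psi_nn t : 0 <= psi0 t.
Proof. destruct (Rle_dec t 0). rewrite psi_le0; lra. apply Rlt_le, psi_pos; lra. Qed.
Lemma psi_mono s t : s <= t -> psi0 s <= psi0 t.
Proof.
  intros H. destruct (Rle_dec s 0). rewrite psi_le0 by auto. apply psi_nn.
  unfold psi0, Hf. destruct (Rle_dec s 0); [lra|]. destruct (Rle_dec t 0); [lra|].
  rewrite !Rmult_1_l. destruct (Req_dec s t). subst; lra.
  apply Rlt_le, exp_increasing. apply Ropp_lt_contravar. apply Rinv_lt_contravar. nra. lra.
Qed.

Definition Lam (t : R) : R := psi0 (1 - t) * / (psi0 (1 - t) + psi0 t).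

Lemma Lam_den t : 0 < psi0 (1 - t) + psi0 t.
Proof.
  destruct (Rle_dec t 0).
  - pose proof (psi_pos (1 - t) ltac:(lra)). pose proof (psi_nn t). lra.
  - pose proof (psi_pos t ltac:(lra)). pose proof (psi_nn (1 - t)). lra.
Qed.

Lemma Lam_Ck_T k : Ck_on k (fun _ => True) Lam.
Proof.
  assert (Ha : Ck_on k (fun _ => True) (fun t => 1 - t)).
  { apply (Ck_on_ext _ _ (fun t => 1 + (-1) * t)). apply open_true. intros; ring.
    apply Ck_plus. apply open_true. apply Ck_const. apply Ck_mult. apply open_true. apply Ck_const. apply Ck_id. }
  assert (Hg : Ck_on k (fun _ => True) (fun t => psi0 (1 - t))).
  { apply (Ck_comp k _ (fun _ => True)); auto; try apply open_true. apply psi_Ck. }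
  unfold Lam. apply Ck_mult. apply open_true. exact Hg.
  apply Ck_inv. apply open_true. intros x _. pose proof (Lam_den x). lra.
  apply Ck_plus. apply open_true. exact Hg. apply psi_Ck.
Qed.

Lemma Lam_Ck k A : Ck_on k A Lam.
Proof. apply (Ck_on_mono k (fun _ => True)). auto. apply Lam_Ck_T. Qed.

Lemma Lam_one t : t <= 0 -> Lam t = 1.
Proof. intros. unfold Lam. rewrite (psi_le0 t H). pose proof (psi_pos (1 - t) ltac:(lra)). field. lra. Qed.
Lemma Lam_zero t : 1 <= t -> Lam t = 0.
Proof. intros. unfold Lam. rewrite (psi_le0 (1 - t)) by lra. ring. Qed.
Lemma Lam_range t : 0 <= Lam t <= 1.
Proof.
  unfold Lam. pose proof (Lam_den t). pose proof (psi_nn t). pose proof (psi_nn (1 - t)).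
  split. apply Rmult_le_pos; auto. apply Rlt_le, Rinv_0_lt_compat; auto.
  apply (Rmult_le_reg_r (psi0 (1 - t) + psi0 t)); auto.
  rewrite Rmult_assoc, Rinv_l by lra. lra.
Qed.
Lemma Lam_noninc s t : s <= t -> Lam t <= Lam s.
Proof.
  intros H. unfold Lam.
  pose proof (Lam_den t). pose proof (Lam_den s).
  pose proof (psi_mono s t H). pose proof (psi_mono (1 - t) (1 - s) ltac:(lra)).
  pose proof (psi_nn t). pose proof (psi_nn s). pose proof (psi_nn (1 - t)). pose proof (psi_nn (1 - s)).
  apply (Rmult_le_reg_r ((psi0 (1 - t) + psi0 t) * (psi0 (1 - s) + psi0 s))). nra.
  replace (psi0 (1 - t) * / (psi0 (1 - t) + psi0 t) * ((psi0 (1 - t) + psi0 t) * (psi0 (1 - s) + psi0 s)))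
    with (psi0 (1 - t) * (psi0 (1 - s) + psi0 s)) by (field; lra).
  replace (psi0 (1 - s) * / (psi0 (1 - s) + psi0 s) * ((psi0 (1 - t) + psi0 t) * (psi0 (1 - s) + psi0 s)))
    with (psi0 (1 - s) * (psi0 (1 - t) + psi0 t)) by (field; lra).
  nra.
Qed.

Lemma noninc_deriv f x l : (forall s t, s <= t -> f t <= f s) -> is_derive f x l -> l <= 0.
Proof.
  intros Hm Hd. apply is_derive_Reals in Hd. destruct (Rle_dec l 0); auto. exfalso.
  destruct (Hd l ltac:(lra)) as [d Hd2].
  assert (Hh : 0 < d / 2) by (pose proof (cond_pos d); lra).
  specialize (Hd2 (d / 2) ltac:(lra) ltac:(rewrite Rabs_right by lra; pose proof (cond_pos d); lra)).
  pose proof (Hm x (x + d / 2) ltac:(lra)).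
  assert ((f (x + d / 2) - f x) / (d / 2) <= 0).
  { unfold Rdiv. apply Rmult_le_0_r. lra. apply Rlt_le, Rinv_0_lt_compat. lra. }
  apply Rabs_def2 in Hd2. lra.
Qed.

Lemma Lam_exd t : ex_derive Lam t.
Proof. destruct (Lam_Ck_T (Some 1%nat) 1%nat ltac:(simpl; lia) t I) as [H _]. exact H. Qed.

Lemma Lam_deriv_nonpos t : Derive Lam t <= 0.
Proof. apply (noninc_deriv Lam t). apply Lam_noninc. apply Derive_correct, Lam_exd. Qed.

Lemma Lam_deriv_zero t : (t < 0 \/ 1 < t) -> Derive Lam t = 0.
Proof.
  intros H. apply is_derive_unique.
  destruct H.
  - apply (is_derive_ext_loc (fun _ => 1)). apply locally_eps. exists (- t). split. lra.
    intros y Hy. apply Rabs_def2 in Hy. symmetry. apply Lam_one. lra. apply isd_const.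
  - apply (is_derive_ext_loc (fun _ => 0)). apply locally_eps. exists (t - 1). split. lra.
    intros y Hy. apply Rabs_def2 in Hy. symmetry. apply Lam_zero. lra. apply isd_const.
Qed.

Lemma sign_lemma (h1 h2 : R -> R) s l1 l2 : is_derive h1 s l1 -> is_derive h2 s l2 ->
  (forall d, 0 < d -> exists t, t <> s /\ Rabs (t - s) < d /\ 0 < (h1 t - h1 s) * (h2 t - h2 s)) ->
  0 <= l1 * l2.
Proof.
  intros H1 H2 H. destruct (Rle_dec 0 (l1 * l2)); auto. exfalso.
  assert (Hl1 : l1 <> 0) by (intro; subst; lra). assert (Hl2 : l2 <> 0) by (intro; subst; lra).
  apply is_derive_Reals in H1. apply is_derive_Reals in H2.
  destruct (H1 (Rabs l1) (Rabs_pos_lt _ Hl1)) as [d1 Hd1].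
  destruct (H2 (Rabs l2) (Rabs_pos_lt _ Hl2)) as [d2 Hd2].
  assert (Hd : 0 < Rmin d1 d2) by (apply Rmin_pos; apply cond_pos).
  destruct (H _ Hd) as [t [Hts [Htd Hp]]].
  pose proof (Rmin_l d1 d2). pose proof (Rmin_r d1 d2).
  assert (Hh : t - s <> 0) by lra.
  specialize (Hd1 (t - s) Hh ltac:(lra)). specialize (Hd2 (t - s) Hh ltac:(lra)).
  assert (Est : s + (t - s) = t) by ring. rewrite Est in Hd1, Hd2.
  set (q1 := (h1 t - h1 s) / (t - s)) in *. set (q2 := (h2 t - h2 s) / (t - s)) in *.
  assert (A1 : 0 < q1 * l1).
  { destruct (Rlt_dec 0 l1). rewrite (Rabs_right l1) in Hd1 by lra. apply Rabs_def2 in Hd1.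
    apply Rmult_lt_0_compat; lra.
    rewrite (Rabs_left l1) in Hd1 by lra. apply Rabs_def2 in Hd1.
    replace (q1 * l1) with ((- q1) * (- l1)) by ring. apply Rmult_lt_0_compat; lra. }
  assert (A2 : 0 < q2 * l2).
  { destruct (Rlt_dec 0 l2). rewrite (Rabs_right l2) in Hd2 by lra. apply Rabs_def2 in Hd2.
    apply Rmult_lt_0_compat; lra.
    rewrite (Rabs_left l2) in Hd2 by lra. apply Rabs_def2 in Hd2.
    replace (q2 * l2) with ((- q2) * (- l2)) by ring. apply Rmult_lt_0_compat; lra. }
  assert (A3 : 0 < q1 * q2).
  { unfold q1, q2. replace ((h1 t - h1 s) / (t - s) * ((h2 t - h2 s) / (t - s))) with
      ((h1 t - h1 s) * (h2 t - h2 s) * / ((t - s) * (t - s))) by (field; auto).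
    apply Rmult_lt_0_compat; auto. apply Rinv_0_lt_compat. nra. }
  assert ((q1 * l1) * (q2 * l2) = (q1 * q2) * (l1 * l2)) by ring.
  assert (0 < (q1 * l1) * (q2 * l2)) by (apply Rmult_lt_0_compat; auto).
  nra.
Qed.

Definition incr_on (S : R -> Prop) (f : R -> R) := forall x y, S x -> S y -> x < y -> f x < f y.

Section Good.
Variable k : smoothness.
Hypothesis hk1 : order_le 1 k.
Variable I : Type.
Variable U : I -> R -> Prop.
Variable phi : I -> R -> R.
Hypothesis Hopen : forall i, ropen (U i).
Hypothesis Hcont : forall i x, U i x -> continuous (phi i) x.
Hypothesis Hinj : forall i x y, U i x -> U i y -> phi i x = phi i y -> x = y.
Hypothesis Hcover : forall x, exists i, U i x.

Definition good (f : R -> R) (x : R) : Prop :=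
  forall j, U j x -> exists G : R -> R,
    (exists d, 0 < d /\ forall y, Rabs (y - x) < d -> U j y /\ G (phi j y) = f y) /\
    (exists e, 0 < e /\ Ck_on k (fun s => Rabs (s - phi j x) < e) G) /\
    Derive G (phi j x) <> 0.

Lemma Ck_ball_exd G c e : 0 < e -> Ck_on k (fun s => Rabs (s - c) < e) G -> ex_derive G c.
Proof.
  intros He H. destruct (H 1%nat hk1 c) as [H1 _]. rewrite Rminus_eq_0, Rabs_R0; auto. exact H1.
Qed.

Lemma good_ext f h x : good f x -> (exists d, 0 < d /\ forall y, Rabs (y - x) < d -> f y = h y) -> good h x.
Proof.
  intros Hg [d [Hd Heq]] j Hj. destruct (Hg j Hj) as [G [[d1 [Hd1 H1]] H2]].
  exists G. split; auto. exists (Rmin d d1). split. apply Rmin_pos; auto.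
  intros y Hy. pose proof (Rmin_l d d1). pose proof (Rmin_r d d1).
  destruct (H1 y ltac:(lra)) as [H3 H4]. split; auto. rewrite H4. apply Heq. lra.
Qed.

Lemma good_cont f x : good f x -> continuous f x.
Proof.
  intros Hg. destruct (Hcover x) as [j Hj]. destruct (Hg j Hj) as [G [[d [Hd H1]] [[e [He H2]] H3]]].
  apply (continuous_ext_loc _ (fun y => G (phi j y))).
  - apply locally_eps. exists d. split; auto. intros y Hy. apply (proj2 (H1 y Hy)).
  - apply cont_comp. apply Hcont; auto. apply exd_cont. eapply Ck_ball_exd; eauto.
Qed.

Lemma good_affine f x a b : a <> 0 -> good f x -> good (fun y => a * f y + b) x.
Proof.
  intros Ha Hg j Hj. destruct (Hg j Hj) as [G [[d [Hd H1]] [[e [He H2]] H3]]].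
  exists (fun s => a * G s + b). split; [|split].
  - exists d. split; auto. intros y Hy. destruct (H1 y Hy). split; auto. rewrite H0; auto.
  - exists e. split; auto. apply Ck_plus. apply open_ball. apply Ck_mult. apply open_ball. apply Ck_const. auto. apply Ck_const.
  - rewrite Derive_plus, Derive_const, Derive_scal. intro. apply H3. apply (Rmult_eq_reg_l a). lra. auto.
    apply ex_derive_scal. eapply Ck_ball_exd; eauto. apply exd_const.
Qed.

Lemma good_rep f x j : good f x -> U j x -> exists G d e, 0 < d /\ 0 < e /\
  (forall y, Rabs (y - x) < d -> U j y /\ G (phi j y) = f y) /\
  Ck_on k (fun s => Rabs (s - phi j x) < e) G /\ Derive G (phi j x) <> 0.
Proof.
  intros Hg Hj. destruct (Hg j Hj) as [G [[d [Hd H1]] [[e [He H2]] H3]]].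
  exists G, d, e. split; [exact Hd|]. split; [exact He|]. split; [exact H1|]. split; [exact H2|exact H3].
Qed.

Lemma good_blend f g x al be K :
  good f x -> good g x -> 0 < al ->
  (exists d, 0 < d /\ forall y, x < y < x + d -> f x < f y /\ g x < g y) ->
  (Derive Lam (al * g x + be) = 0 \/ f x < K + g x) ->
  good (fun y => Lam (al * g y + be) * f y + (1 + (-1) * Lam (al * g y + be)) * (K + g y)) x.
Proof.
  intros Hf Hg Hal [di [Hdi Hinc]] Hcase j Hj.
  destruct (good_rep f x j Hf Hj) as [Gf [df [ef [Hdf [Hef [Rf [Cf Nf]]]]]]].
  destruct (good_rep g x j Hg Hj) as [Gg [dg [eg [Hdg [Heg [Rg [Cg Ng]]]]]]].
  set (s0 := phi j x) in *.
  exists (fun s => Lam (al * Gg s + be) * Gf s + (1 + (-1) * Lam (al * Gg s + be)) * (K + Gg s)).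
  assert (Ex : Gf s0 = f x /\ Gg s0 = g x).
  { unfold s0. split; [apply Rf|apply Rg]; rewrite Rminus_eq_0, Rabs_R0; auto. }
  split; [|split].
  - exists (Rmin df dg). split. apply Rmin_pos; auto. intros y Hy.
    pose proof (Rmin_l df dg). pose proof (Rmin_r df dg).
    destruct (Rf y ltac:(lra)) as [Uy Ef]. destruct (Rg y ltac:(lra)) as [_ Eg].
    split; auto. rewrite Ef, Eg. reflexivity.
  - exists (Rmin ef eg). split. apply Rmin_pos; auto.
    set (A := fun s => Rabs (s - s0) < Rmin ef eg).
    assert (HA : ropen A) by apply open_ball.
    assert (CfA : Ck_on k A Gf).
    { apply (Ck_on_mono k (fun s => Rabs (s - s0) < ef)); auto. intros s Hs. unfold A in Hs. pose proof (Rmin_l ef eg). lra. }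
    assert (CgA : Ck_on k A Gg).
    { apply (Ck_on_mono k (fun s => Rabs (s - s0) < eg)); auto. intros s Hs. unfold A in Hs. pose proof (Rmin_r ef eg). lra. }
    assert (CL : Ck_on k A (fun s => Lam (al * Gg s + be))).
    { apply (Ck_comp k A (fun _ => True)); [exact HA|apply open_true|intros; trivial| |apply Lam_Ck].
      apply Ck_plus; [exact HA| |apply Ck_const]. apply Ck_mult; [exact HA|apply Ck_const|exact CgA]. }
    apply Ck_plus; [exact HA| apply Ck_mult; [exact HA|exact CL|exact CfA] | ].
    apply Ck_mult; [exact HA| |].
    + apply Ck_plus; [exact HA|apply Ck_const|]. apply Ck_mult; [exact HA|apply Ck_const|exact CL].
    + apply Ck_plus; [exact HA|apply Ck_const|exact CgA].
  - assert (XDf : is_derive Gf s0 (Derive Gf s0)) by (apply Derive_correct; exact (Ck_ball_exd Gf s0 ef Hef Cf)).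
    assert (XDg : is_derive Gg s0 (Derive Gg s0)) by (apply Derive_correct; exact (Ck_ball_exd Gg s0 eg Heg Cg)).
    set (Df := Derive Gf s0) in *. set (Dg := Derive Gg s0) in *.
    set (tau := al * Gg s0 + be).
    assert (XDl : is_derive Lam tau (Derive Lam tau)) by (apply Derive_correct, Lam_exd).
    set (Dl := Derive Lam tau) in *.
    assert (Xtau : is_derive (fun s => al * Gg s + be) s0 (al * Dg + 0)).
    { apply isd_plus. apply is_derive_scal. auto. apply isd_const. }
    assert (XL : is_derive (fun s => Lam (al * Gg s + be)) s0 ((al * Dg + 0) * Dl)).
    { apply (isd_comp Lam (fun s => al * Gg s + be)); auto. }
    assert (XP : is_derive (fun s => Lam (al * Gg s + be) * Gf s + (1 + (-1) * Lam (al * Gg s + be)) * (K + Gg s)) s0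
       (((al * Dg + 0) * Dl) * Gf s0 + Lam tau * Df +
        ((0 + (-1) * ((al * Dg + 0) * Dl)) * (K + Gg s0) + (1 + (-1) * Lam tau) * (0 + Dg)))).
    { apply (isd_plus (fun s => Lam (al * Gg s + be) * Gf s) (fun s => (1 + (-1) * Lam (al * Gg s + be)) * (K + Gg s))).
      - apply (Derive.is_derive_mult (fun s => Lam (al * Gg s + be)) Gf). exact XL. exact XDf.
      - apply (Derive.is_derive_mult (fun s => 1 + (-1) * Lam (al * Gg s + be)) (fun s => K + Gg s)).
        + apply (isd_plus (fun _ => 1) (fun s => (-1) * Lam (al * Gg s + be))). apply isd_const.
          apply (is_derive_scal (fun s => Lam (al * Gg s + be))). exact XL.
        + apply (isd_plus (fun _ => K) Gg). apply isd_const. exact XDg. }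
    pose proof (is_derive_unique _ _ _ XP) as EqD.
    intro Hz0.
    assert (Hz : ((al * Dg + 0) * Dl) * Gf s0 + Lam tau * Df +
        ((0 + (-1) * ((al * Dg + 0) * Dl)) * (K + Gg s0) + (1 + (-1) * Lam tau) * (0 + Dg)) = 0).
    { rewrite <- EqD. exact Hz0. }
    clear Hz0 EqD.
    destruct Ex as [Ef Eg]. rewrite Ef, Eg in Hz.
    assert (Hfg : 0 <= Df * Dg).
    { apply (sign_lemma Gf Gg s0); auto.
      intros dl Hdl. destruct (cont_eps (phi j) x (Hcont j x Hj) dl Hdl) as [eta [Heta Hc]].
      set (dd := Rmin (Rmin eta di) (Rmin df dg)).
      assert (Hdd : 0 < dd) by (apply Rmin_pos; apply Rmin_pos; auto).
      pose proof (Rmin_l (Rmin eta di) (Rmin df dg)). pose proof (Rmin_r (Rmin eta di) (Rmin df dg)).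
      pose proof (Rmin_l eta di). pose proof (Rmin_r eta di). pose proof (Rmin_l df dg). pose proof (Rmin_r df dg).
      fold dd in H, H0.
      set (y := x + dd / 2).
      assert (Hyx : Rabs (y - x) < dd) by (unfold y; rewrite Rabs_right; lra).
      destruct (Rf y ltac:(lra)) as [Uy Efy]. destruct (Rg y ltac:(lra)) as [_ Egy].
      exists (phi j y). split; [|split].
      - intro Heq. apply Hinj in Heq; auto. unfold y in Heq. lra.
      - apply Hc. lra.
      - rewrite Efy, Egy, Ef, Eg.
        destruct (Hinc y ltac:(unfold y; lra)). apply Rmult_lt_0_compat; lra. }
    assert (Hfg' : 0 < Df * Dg).
    { destruct (Rle_lt_or_eq_dec _ _ Hfg); auto. exfalso. symmetry in e.
      apply Rmult_integral in e. destruct e; auto. }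
    assert (HDg2 : 0 < Dg * Dg) by (apply Rsqr_pos_lt; auto).
    pose proof (Lam_range tau) as [HL0 HL1].
    pose proof (Lam_deriv_nonpos tau) as HDl. fold Dl in HDl.
    assert (Etau : tau = al * g x + be) by (unfold tau; rewrite Eg; ring).
    assert (P1 : 0 <= Dl * (f x - K - g x)).
    { destruct Hcase as [Hc|Hc].
      - unfold Dl. rewrite Etau, Hc. lra.
      - assert (0 <= (- Dl) * (K + g x - f x)) by (apply Rmult_le_pos; lra). nra. }
    set (L := Lam tau) in *.
    assert (P2 : 0 <= al * (Dg * Dg) * (Dl * (f x - K - g x))).
    { apply Rmult_le_pos; auto. apply Rmult_le_pos; lra. }
    assert (P3 : 0 < L * (Df * Dg) + (1 - L) * (Dg * Dg)).
    { destruct (Rlt_dec 0 L).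
      - assert (0 < L * (Df * Dg)) by (apply Rmult_lt_0_compat; auto).
        assert (0 <= (1 - L) * (Dg * Dg)) by (apply Rmult_le_pos; lra). lra.
      - assert (L = 0) by lra. rewrite H. lra. }
    assert (E : (((al * Dg + 0) * Dl) * f x + L * Df +
        ((0 + (-1) * ((al * Dg + 0) * Dl)) * (K + g x) + (1 + (-1) * L) * (0 + Dg))) * Dg
        = al * (Dg * Dg) * (Dl * (f x - K - g x)) + L * (Df * Dg) + (1 - L) * (Dg * Dg)) by ring.
    rewrite Hz in E. lra.
Qed.



Lemma good_L g x K : good g x -> good (fun y => K + g y) x.
Proof.
  intros H. apply (good_ext (fun y => 1 * g y + K)). apply good_affine. intro Hc; lra. exact H.
  exists 1. split. lra. intros; ring.
Qed.

Lemma stepB (P : R -> Prop) f g b c d e1 e2 M :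
  c < e1 -> e1 < e2 -> e2 < b -> b < d -> (forall y, c < y -> P y) ->
  (forall y, P y -> y < b -> good f y) -> incr_on (fun y => P y /\ y < b) f ->
  (forall y, c < y -> y < d -> good g y) -> incr_on (fun y => c < y /\ y < d) g ->
  exists F, (forall y, P y -> y < d -> good F y) /\ incr_on (fun y => P y /\ y < d) F /\
       (forall y, y <= e1 -> F y = f y) /\ (forall y, e2 <= y -> y < d -> M <= F y).
Proof.
  intros H1 H2 H3 H4 HP Hfg Hfi Hgg Hgi.
  assert (Hg12 : g e1 < g e2) by (apply Hgi; repeat split; lra).
  set (al := / (g e2 - g e1)).
  assert (Hal : 0 < al) by (apply Rinv_0_lt_compat; lra).
  set (be := - al * g e1).
  set (K := Rmax (f e2 - g e1 + 1) (M - g e2)).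
  assert (HK1 : f e2 - g e1 + 1 <= K) by apply Rmax_l.
  assert (HK2 : M - g e2 <= K) by apply Rmax_r.
  set (Phi := fun y => Lam (al * g y + be) * f y + (1 + (-1) * Lam (al * g y + be)) * (K + g y)).
  set (F := fun y => if Rle_dec y c then f y else if Rlt_dec y b then Phi y else K + g y).
  assert (Htau : forall y, al * g y + be = (g y - g e1) / (g e2 - g e1)).
  { intros y. unfold be, al. field. lra. }
  assert (Hlam1 : forall y, c < y -> y <= e1 -> Lam (al * g y + be) = 1).
  { intros y Hy1 Hy2. apply Lam_one. rewrite Htau. unfold Rdiv.
    apply Rmult_le_0_r. destruct (Req_dec y e1). subst; lra.
    assert (g y < g e1) by (apply Hgi; repeat split; lra). lra.
    apply Rlt_le, Rinv_0_lt_compat; lra. }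
  assert (Hlam0 : forall y, e2 <= y -> y < d -> Lam (al * g y + be) = 0).
  { intros y Hy1 Hy2. apply Lam_zero. rewrite Htau.
    apply (Rmult_le_reg_r (g e2 - g e1)). lra. unfold Rdiv. rewrite Rmult_assoc, Rinv_l by lra.
    destruct (Req_dec y e2). subst; lra.
    assert (g e2 < g y) by (apply Hgi; repeat split; lra). lra. }
  assert (FE1 : forall y, y <= e1 -> F y = f y).
  { intros y Hy. unfold F. destruct (Rle_dec y c); auto. destruct (Rlt_dec y b); [|lra].
    unfold Phi. rewrite Hlam1 by lra. ring. }
  assert (FPhi : forall y, c < y -> y < b -> F y = Phi y).
  { intros y Hy1 Hy2. unfold F. destruct (Rle_dec y c); [lra|]. destruct (Rlt_dec y b); [auto|lra]. }
  assert (FL : forall y, e2 <= y -> y < d -> F y = K + g y).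
  { intros y Hy1 Hy2. unfold F. destruct (Rle_dec y c); [lra|]. destruct (Rlt_dec y b); auto.
    unfold Phi. rewrite Hlam0 by lra. ring. }
  assert (Hfb : forall y, e1 <= y <= e2 -> f y < K + g y).
  { intros y Hy. assert (f y <= f e2).
    { destruct (Req_dec y e2). subst; lra. apply Rlt_le, Hfi; repeat split; try apply HP; lra. }
    assert (g e1 <= g y).
    { destruct (Req_dec y e1). subst; lra. apply Rlt_le, Hgi; repeat split; lra. }
    lra. }
  assert (Phi_incr : forall x y, e1 <= x -> x < y -> y < b -> Phi x < Phi y).
  { intros x y Hx Hxy Hy. unfold Phi.
    set (lx := Lam (al * g x + be)). set (ly := Lam (al * g y + be)).
    assert (Hfxy : f x < f y) by (apply Hfi; repeat split; try apply HP; lra).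
    assert (Hgxy : g x < g y) by (apply Hgi; repeat split; lra).
    assert (Hl : ly <= lx). { apply Lam_noninc. apply Rplus_le_compat_r. apply Rmult_le_compat_l; lra. }
    pose proof (Lam_range (al * g x + be)) as [Hlx0 Hlx1]. fold lx in Hlx0, Hlx1.
    pose proof (Lam_range (al * g y + be)) as [Hly0 Hly1]. fold ly in Hly0, Hly1.
    assert (A1 : 0 < ly * (f y - f x) + (1 - ly) * (g y - g x)).
    { destruct (Rlt_dec 0 ly).
      - assert (0 < ly * (f y - f x)) by (apply Rmult_lt_0_compat; lra).
        assert (0 <= (1 - ly) * (g y - g x)) by (apply Rmult_le_pos; lra). lra.
      - assert (ly = 0) by lra. rewrite H. lra. }
    assert (A2 : 0 <= (lx - ly) * (K + g x - f x)).
    { destruct (Rle_dec x e2).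
      - apply Rmult_le_pos; try lra. pose proof (Hfb x ltac:(lra)). lra.
      - unfold lx, ly. rewrite (Hlam0 x), (Hlam0 y) by lra. lra. }
    assert (E : ly * f y + (1 + -1 * ly) * (K + g y) - (lx * f x + (1 + -1 * lx) * (K + g x)) =
      (ly * (f y - f x) + (1 - ly) * (g y - g x)) + (lx - ly) * (K + g x - f x)) by ring.
    lra. }
  assert (L_incr : forall x y, e2 <= x -> x < y -> y < d -> K + g x < K + g y).
  { intros x y Hx Hxy Hy. assert (g x < g y) by (apply Hgi; repeat split; lra). lra. }
  exists F. split; [|split; [|split]].
  - intros y Py Hyd.
    destruct (Rlt_dec y e1).
    + apply (good_ext f). apply Hfg; auto; lra.
      exists (e1 - y). split. lra. intros z Hz. apply Rabs_def2 in Hz. symmetry. apply FE1. lra.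
    + destruct (Rlt_dec e2 y).
      * apply (good_ext (fun z => K + g z)). apply good_L. apply Hgg; lra.
        exists (Rmin (y - e2) (d - y)). split. apply Rmin_pos; lra.
        intros z Hz. pose proof (Rmin_l (y - e2) (d - y)). pose proof (Rmin_r (y - e2) (d - y)).
        apply Rabs_def2 in Hz. symmetry. apply FL; lra.
      * apply (good_ext Phi).
        { unfold Phi. apply good_blend. apply Hfg; [apply HP|]; lra. apply Hgg; lra. exact Hal.
          exists (b - y). split. lra. intros z Hz. split.
          apply Hfi; repeat split; try apply HP; lra. apply Hgi; repeat split; lra.
          right. apply Hfb. lra. }
        exists (Rmin (y - c) (b - y)). split. apply Rmin_pos; lra.
        intros z Hz. pose proof (Rmin_l (y - c) (b - y)). pose proof (Rmin_r (y - c) (b - y)).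
        apply Rabs_def2 in Hz. symmetry. apply FPhi; lra.
  - intros x y [Px Hxd] [Py Hyd] Hxy.
    destruct (Rle_dec y e1).
    { rewrite !FE1 by lra. apply Hfi; repeat split; auto; lra. }
    destruct (Rle_dec e2 x).
    { rewrite !FL by lra. apply L_incr; lra. }
    assert (Fe1e2 : F e1 < F e2) by (rewrite !FPhi by lra; apply Phi_incr; lra).
    destruct (Rlt_dec x e1).
    + assert (F x < F e1) by (rewrite !FE1 by lra; apply Hfi; repeat split; try assumption; try (apply HP; lra); lra).
      destruct (Rlt_dec y b).
      * assert (F e1 < F y) by (rewrite !FPhi by lra; apply Phi_incr; lra). lra.
      * assert (F e2 < F y). { rewrite !FL by lra. apply L_incr; lra. } lra.
    + destruct (Rlt_dec y b).
      * rewrite !FPhi by lra. apply Phi_incr; lra.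
      * assert (F x < F e2) by (rewrite !FPhi by lra; apply Phi_incr; lra).
        assert (F e2 < F y) by (rewrite !FL by lra; apply L_incr; lra). lra.
  - exact FE1.
  - intros y Hy1 Hy2. rewrite FL by lra.
    assert (g e2 <= g y). { destruct (Req_dec y e2). subst; lra. apply Rlt_le, Hgi; repeat split; lra. }
    lra.
Qed.

End Good.

Lemma cont_opp x : continuous (fun y : R => - y) x.
Proof.
  apply eps_cont. intros e He. exists e. split; auto. intros y Hy.
  replace (- y - - x) with (- (y - x)) by ring. rewrite Rabs_Ropp. auto.
Qed.

Lemma good_refl_gen k I (U U2 : I -> R -> Prop) (phi phi2 : I -> R -> R) f x :
  (forall i y, U2 i y <-> U i (- y)) -> (forall i y, phi2 i y = phi i (- y)) ->
  good k I U phi f x -> good k I U2 phi2 (fun y => - f (- y)) (- x).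
Proof.
  intros HU Hphi Hg j Hj. apply HU in Hj. rewrite Ropp_involutive in Hj.
  destruct (Hg j Hj) as [G [[d [Hd H1]] [[e [He H2]] H3]]].
  exists (fun s => (-1) * G s). split; [|split].
  - exists d. split; auto. intros y Hy.
    assert (Hy' : Rabs (- y - x) < d) by (replace (- y - x) with (- (y - - x)) by ring; rewrite Rabs_Ropp; auto).
    destruct (H1 _ Hy') as [H4 H5]. split. apply HU; auto. rewrite Hphi, H5. ring.
  - exists e. split; auto. rewrite Hphi, Ropp_involutive.
    apply Ck_mult. apply open_ball. apply Ck_const. auto.
  - rewrite Hphi, Ropp_involutive. rewrite Derive_scal. intro. apply H3. lra.
Qed.

Lemma incr_refl (S : R -> Prop) f : incr_on S f -> incr_on (fun y => S (- y)) (fun y => - f (- y)).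
Proof. intros H x y Hx Hy Hxy. assert (f (- y) < f (- x)) by (apply H; auto; lra). lra. Qed.

Lemma stepB_left k (hk1 : order_le 1 k) I (U : I -> R -> Prop) (phi : I -> R -> R)
  (Hcont : forall i x, U i x -> continuous (phi i) x)
  (Hinj : forall i x y, U i x -> U i y -> phi i x = phi i y -> x = y)
  (P : R -> Prop) f g a c d e1 e2 M :
  c < a -> a < e1 -> e1 < e2 -> e2 < d -> (forall y, y < d -> P y) ->
  (forall y, P y -> a < y -> good k I U phi f y) -> incr_on (fun y => P y /\ a < y) f ->
  (forall y, c < y -> y < d -> good k I U phi g y) -> incr_on (fun y => c < y /\ y < d) g ->
  exists F, (forall y, P y -> c < y -> good k I U phi F y) /\ incr_on (fun y => P y /\ c < y) F /\
       (forall y, e2 <= y -> F y = f y) /\ (forall y, c < y -> y <= e1 -> F y <= - M).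
Proof.
  intros H1 H2 H3 H4 HP Hfg Hfi Hgg Hgi.
  set (U' := fun i y => U i (- y)). set (phi' := fun i y => phi i (- y)).
  assert (Hcont' : forall i x, U' i x -> continuous (phi' i) x).
  { intros i x Hx. unfold phi'. apply cont_comp. apply cont_opp. apply Hcont. auto. }
  assert (Hinj' : forall i x y, U' i x -> U' i y -> phi' i x = phi' i y -> x = y).
  { intros i x y Hx Hy Hxy. assert (- x = - y) by (apply (Hinj i); auto). lra. }
  destruct (stepB k hk1 I U' phi' Hcont' Hinj' (fun y => P (- y)) (fun y => - f (- y)) (fun y => - g (- y))
    (- a) (- d) (- c) (- e2) (- e1) M) as [F' [HF1 [HF2 [HF3 HF4]]]]; try lra.
  - intros y Hy. apply HP. lra.
  - intros y Hy Hy2. pose proof (good_refl_gen k I U U' phi phi' f (- y)) as Hg. rewrite Ropp_involutive in Hg.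
    apply Hg. intros; unfold U'; tauto. intros; unfold phi'; reflexivity. apply Hfg; auto. lra.
  - apply (incr_refl (fun y => P y /\ a < y)) in Hfi. intros x y Hx Hy Hxy. apply Hfi; auto; simpl; split; try tauto; lra.
  - intros y Hy Hy2. pose proof (good_refl_gen k I U U' phi phi' g (- y)) as Hg. rewrite Ropp_involutive in Hg.
    apply Hg. intros; unfold U'; tauto. intros; unfold phi'; reflexivity. apply Hgg; lra.
  - apply (incr_refl (fun y => c < y /\ y < d)) in Hgi. intros x y Hx Hy Hxy. apply Hgi; auto; simpl; split; lra.
  - exists (fun y => - F' (- y)). split; [|split; [|split]].
    + intros y Py Hy.
      apply (good_refl_gen k I U' U phi' phi F' (- y)) in HF1.
      * rewrite Ropp_involutive in HF1. exact HF1.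
      * intros i z. unfold U'. rewrite Ropp_involutive. tauto.
      * intros i z. unfold phi'. rewrite Ropp_involutive. auto.
      * rewrite Ropp_involutive. auto.
      * lra.
    + apply (incr_refl _ F') in HF2. intros x y Hx Hy Hxy. apply HF2; auto; simpl; rewrite Ropp_involutive; split; try tauto; lra.
    + intros y Hy. rewrite HF3 by lra. rewrite !Ropp_involutive. auto.
    + intros y Hy1 Hy2. pose proof (HF4 (- y) ltac:(lra) ltac:(lra)). lra.
Qed.

Lemma clamp_lip a c y z : a <= c -> Rabs (Rmax a (Rmin c y) - Rmax a (Rmin c z)) <= Rabs (y - z).
Proof. intros. unfold Rmax, Rmin. repeat destruct Rle_dec; split_Rabs; lra. Qed.

Lemma clamp_in a c y : a <= c -> a <= Rmax a (Rmin c y) <= c.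
Proof. intros. unfold Rmax, Rmin. repeat destruct Rle_dec; lra. Qed.

Lemma clamp_id a c y : a <= y <= c -> Rmax a (Rmin c y) = y.
Proof. intros. unfold Rmax, Rmin. repeat destruct Rle_dec; lra. Qed.

Lemma clamp_cont (f : R -> R) a c : a <= c -> (forall z, a <= z <= c -> continuous f z) ->
  continuity (fun y => f (Rmax a (Rmin c y))).
Proof.
  intros Hac Hf z. apply continuity_pt_filterlim.
  change (continuous (fun y => f (Rmax a (Rmin c y))) z).
  apply cont_comp.
  - apply eps_cont. intros e He. exists e. split; auto. intros y Hy.
    eapply Rle_lt_trans. apply clamp_lip; auto. auto.
  - apply Hf. apply clamp_in; auto.
Qed.

Lemma ivt_in (f : R -> R) a c u v y : a <= c -> (forall z, a <= z <= c -> continuous f z) ->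
  a <= u <= c -> a <= v <= c -> u <= v -> Rmin (f u) (f v) <= y <= Rmax (f u) (f v) ->
  exists z, u <= z <= v /\ f z = y.
Proof.
  intros Hac Hf Hu Hv Huv Hy.
  destruct (IVT_gen (fun y => f (Rmax a (Rmin c y))) u v y (clamp_cont f a c Hac Hf)) as [z [Hz1 Hz2]].
  rewrite !clamp_id by lra. auto.
  rewrite Rmin_left in Hz1 by lra. rewrite Rmax_right in Hz1 by lra.
  exists z. split. lra. rewrite clamp_id in Hz2 by lra. auto.
Qed.

Lemma between (f : R -> R) a b c : a < b < c -> (forall z, a <= z <= c -> continuous f z) ->
  (forall x y, a <= x <= c -> a <= y <= c -> f x = f y -> x = y) ->
  (f a < f b < f c) \/ (f c < f b < f a).
Proof.
  intros Habc Hf Hinj.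
  assert (N1 : f a <> f b) by (intro H; apply Hinj in H; lra).
  assert (N2 : f b <> f c) by (intro H; apply Hinj in H; lra).
  assert (N3 : f a <> f c) by (intro H; apply Hinj in H; lra).
  destruct (Rtotal_order (f a) (f b)) as [Hab|[Hab|Hab]]; [|contradiction|];
  destruct (Rtotal_order (f b) (f c)) as [Hbc|[Hbc|Hbc]]; try contradiction; try (left; lra); try (right; lra).
  -
    destruct (Rtotal_order (f a) (f c)) as [Hac|[Hac|Hac]]; [|contradiction|].
    + destruct (ivt_in f a c a b (f c)) as [z [Hz1 Hz2]]; try lra; auto.
      rewrite Rmin_left, Rmax_right; lra.
      apply Hinj in Hz2; lra.
    + destruct (ivt_in f a c b c (f a)) as [z [Hz1 Hz2]]; try lra; auto.
      rewrite Rmin_right, Rmax_left; lra.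
      apply Hinj in Hz2; lra.
  -
    destruct (Rtotal_order (f a) (f c)) as [Hac|[Hac|Hac]]; [|contradiction|].
    + destruct (ivt_in f a c b c (f a)) as [z [Hz1 Hz2]]; try lra; auto.
      rewrite Rmin_left, Rmax_right; lra.
      apply Hinj in Hz2; lra.
    + destruct (ivt_in f a c a b (f c)) as [z [Hz1 Hz2]]; try lra; auto.
      rewrite Rmin_right, Rmax_left; lra.
      apply Hinj in Hz2; lra.
Qed.

Lemma inj_cont_incr (f : R -> R) a c : a < c -> (forall z, a <= z <= c -> continuous f z) ->
  (forall x y, a <= x <= c -> a <= y <= c -> f x = f y -> x = y) -> f a < f c ->
  forall x y, a <= x -> x < y -> y <= c -> f x < f y.
Proof.
  intros Hac Hf Hinj Hfac.
  assert (Hin : forall p, a < p < c -> f a < f p < f c).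
  { intros p Hp. destruct (between f a p c) as [H|H]; auto; lra. }
  intros x y Hx Hxy Hy.
  destruct (Req_dec x a).
  - subst. destruct (Req_dec y c). subst; auto. apply Hin; lra.
  - destruct (Req_dec y c).
    + subst. apply Hin; lra.
    + destruct (between f a x y) as [H1|H1]; try lra.
      intros; apply Hf; lra. intros; apply Hinj; auto; lra.
      pose proof (Hin x ltac:(lra)). lra.
Qed.

Lemma img_open U phi W : is_chart U phi -> ropen W -> (forall y, W y -> U y) -> ropen (img phi W).
Proof.
  intros [HU [Hinj [Hc [Himg [pinv [Hp1 Hp2]]]]]] HW HWU.
  apply open_eps. intros t [z [Wz Ez]].
  destruct (proj1 (open_eps _) Himg t) as [e1 [He1 H1]]. { exists z; split; auto. }
  destruct (proj1 (open_eps W) HW z Wz) as [e2 [He2 H2]].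
  assert (Ht : img phi U t) by (exists z; split; auto).
  destruct (cont_eps pinv t (Hp2 t Ht) e2 He2) as [d [Hd H3]].
  exists (Rmin e1 d). split. apply Rmin_pos; auto.
  intros t' Ht'. pose proof (Rmin_l e1 d). pose proof (Rmin_r e1 d).
  destruct (H1 t' ltac:(lra)) as [z' [Uz' Ez']].
  exists z'. split; auto. apply H2.
  specialize (H3 t' ltac:(lra)). rewrite <- Ez', <- Ez in H3. rewrite !Hp1 in H3; auto.
Qed.

Lemma Ck_exd k A f x : order_le 1 k -> Ck_on k A f -> A x -> ex_derive f x.
Proof. intros Hk H Hx. destruct (H 1%nat Hk x Hx) as [H1 _]. exact H1. Qed.

Section Atlas.
Variable k : smoothness.
Hypothesis hk : valid_smoothness k.
Variable I : Type.
Variable U : I -> R -> Prop.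
Variable phi : I -> R -> R.
Hypothesis HA : Ck_atlas k I U phi.

Lemma hk1 : order_le 1 k.
Proof. destruct k; simpl in *; auto. Qed.
Lemma Hchart i : is_chart (U i) (phi i).
Proof. apply HA. Qed.
Lemma Hopen i : ropen (U i).
Proof. destruct (Hchart i) as [H _]. exact H. Qed.
Lemma Hcont i x : U i x -> continuous (phi i) x.
Proof. destruct (Hchart i) as [_ [_ [H _]]]. apply H. Qed.
Lemma Hinj i x y : U i x -> U i y -> phi i x = phi i y -> x = y.
Proof. destruct (Hchart i) as [_ [H _]]. apply H. Qed.
Lemma Hcover x : exists i, U i x.
Proof. apply HA. Qed.

Lemma phi_good i y : U i y -> good k I U phi (phi i) y.
Proof.
  intros Hy j Hj.
  destruct (proj1 (proj2 HA) j i) as [Hdis|[g [h [E1 [E2 [Cg Ch]]]]]].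
  { exfalso. apply (Hdis y). auto. }
  set (W := inter (U j) (U i)).
  assert (HW : ropen W) by (apply open_and; apply Hopen).
  assert (HWj : ropen (img (phi j) W)).
  { apply (img_open (U j)). apply Hchart. exact HW. intros z [? ?]; auto. }
  assert (HWi : ropen (img (phi i) W)).
  { apply (img_open (U i)). apply Hchart. exact HW. intros z [? ?]; auto. }
  assert (Wy : W y) by (split; auto).
  exists g. split; [|split].
  - destruct (proj1 (open_eps W) HW y Wy) as [d [Hd Hd2]]. exists d. split; auto.
    intros z Hz. destruct (Hd2 z Hz) as [Hzj Hzi]. split; auto.
  - destruct (proj1 (open_eps _) HWj (phi j y)) as [e [He He2]]. exists y; split; auto.
    exists e. split; auto. eapply Ck_on_mono; [|exact Cg]. intros s Hs. apply He2; auto.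
  - set (s := phi j y).
    destruct (proj1 (open_eps _) HWj s) as [e [He He2]]. exists y; split; auto.
    assert (Xg : is_derive g s (Derive g s)).
    { apply Derive_correct. apply (Ck_exd k (img (phi j) W) g s hk1 Cg). exists y; split; auto. }
    assert (Xh : is_derive h (g s) (Derive h (g s))).
    { apply Derive_correct. apply (Ck_exd k (img (phi i) W) h (g s) hk1 Ch).
      exists y. split; auto. unfold s. rewrite E1; auto. }
    assert (X1 : is_derive (fun t => h (g t)) s (Derive g s * Derive h (g s))).
    { apply isd_comp; auto. }
    assert (X2 : is_derive (fun t => h (g t)) s 1).
    { apply (is_derive_ext_loc (fun t => t)). apply locally_eps. exists e. split; auto.
      intros t Ht. destruct (He2 t Ht) as [z [[Hzj Hzi] Ez]]. subst t. rewrite E1, E2; auto.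
      apply isd_id. }
    pose proof (is_derive_unique _ _ _ X1). pose proof (is_derive_unique _ _ _ X2).
    intro Hz. rewrite Hz in H. lra.
Qed.

Lemma local_exists x : exists d f, 0 < d /\ (forall y, Rabs (y - x) < d -> good k I U phi f y) /\
  incr_on (fun y => x - d < y /\ y < x + d) f.
Proof.
  destruct (Hcover x) as [i Hi].
  destruct (proj1 (open_eps _) (Hopen i) x Hi) as [r [Hr Hr2]].
  set (a := x - r / 2). set (c := x + r / 2).
  assert (Hac : forall z, a <= z <= c -> U i z). { intros z Hz. apply Hr2. unfold a, c in Hz. split_Rabs; lra. }
  assert (Hc : forall z, a <= z <= c -> continuous (phi i) z) by (intros; apply Hcont; auto).
  assert (Hj : forall p q, a <= p <= c -> a <= q <= c -> phi i p = phi i q -> p = q)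
    by (intros; apply (Hinj i); auto).
  exists (r / 2).
  destruct (Rlt_dec (phi i a) (phi i c)).
  - exists (phi i). split. lra. split.
    + intros y Hy. apply phi_good. apply Hr2. lra.
    + intros p q Hp Hq Hpq. apply (inj_cont_incr (phi i) a c); unfold a, c in *; auto; lra.
  - assert (phi i a <> phi i c) by (intro H; apply Hj in H; unfold a, c in *; lra).
    exists (fun y => -1 * phi i y + 0). split. lra. split.
    + intros y Hy. apply good_affine. apply hk1. lra. apply phi_good. apply Hr2. lra.
    + intros p q Hp Hq Hpq.
      assert (- phi i a < - phi i c) by lra.
      assert (- phi i p < - phi i q).
      { apply (inj_cont_incr (fun y => - phi i y) a c); unfold a, c in *; auto; try lra.
        intros z Hz. apply cont_comp. apply Hc; auto. apply cont_opp.
        intros p' q' Hp' Hq' E. apply Hj; auto. lra. }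
      lra.
Qed.

Lemma incr_sub (S1 S2 : R -> Prop) f : (forall y, S2 y -> S1 y) -> incr_on S1 f -> incr_on S2 f.
Proof. intros H Hf x y Hx Hy Hxy. apply Hf; auto. Qed.

Lemma Qlem p q : p < q -> exists g, (forall y, p < y < q -> good k I U phi g y) /\ incr_on (fun y => p < y < q) g.
Proof.
  intros Hpq.
  set (E := fun t => exists a f, a < p /\ (forall y, a < y < t -> good k I U phi f y) /\ incr_on (fun y => a < y /\ y < t) f).
  assert (EQ : E q).
  { destruct (classic (E q)) as [H|Hn]; auto. exfalso.
    assert (Edown : forall t t', E t -> t' <= t -> E t').
    { intros t t' [a [f [Ha [Hg Hi]]]] Ht. exists a, f. split; auto. split.
      intros y Hy; apply Hg; lra. apply (incr_sub (fun y => a < y /\ y < t)); auto. intros y Hy; lra. }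
    set (S := fun t => p < t /\ E t).
    destruct (local_exists p) as [d0 [f0 [Hd0 [Hg0 Hi0]]]].
    assert (S0 : S (p + d0)).
    { split. lra. exists (p - d0), f0. split. lra. split.
      intros y Hy. apply Hg0. split_Rabs; lra.
      apply (incr_sub (fun y => p - d0 < y /\ y < p + d0)); auto. }
    assert (Sb : bound S).
    { exists q. intros t [Ht1 Ht2]. destruct (Rle_dec t q); auto. exfalso. apply Hn. apply (Edown t); auto. lra. }
    destruct (completeness S Sb (ex_intro _ _ S0)) as [m [Hm1 Hm2]].
    assert (Hmp : p + d0 <= m) by (apply Hm1; auto).
    destruct (local_exists m) as [d1 [g [Hd1 [Hgg Hgi]]]].
    set (dd := Rmin d1 ((m - p) / 2)).
    assert (Hdd : 0 < dd) by (apply Rmin_pos; lra).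
    assert (Hdd1 : dd <= d1) by apply Rmin_l. assert (Hdd2 : dd <= (m - p) / 2) by apply Rmin_r.
    assert (Ht : exists t, S t /\ m - dd / 2 < t).
    { destruct (classic (exists t, S t /\ m - dd / 2 < t)) as [H1|H1]; auto. exfalso.
      assert (m <= m - dd / 2). { apply Hm2. intros t Ht. destruct (Rle_dec t (m - dd / 2)); auto.
        exfalso. apply H1. exists t. split; auto. lra. }
      lra. }
    destruct Ht as [t [[Htp [a [f [Ha [Hfg Hfi]]]]] Htm]].
    assert (Htle : t <= m) by (apply Hm1; split; auto; exists a, f; auto).
    set (c := m - dd). set (dr := m + dd).
    destruct (stepB k hk1 I U phi Hcont Hinj (fun y => a < y) f g t c dr (c + (t - c) / 3) (c + 2 * (t - c) / 3) 0)
      as [F [HF1 [HF2 _]]]; unfold c, dr in *; try lra.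
    + intros y Hy. lra.
    + intros y Hy1 Hy2. apply Hfg. lra.
    + exact Hfi.
    + intros y Hy1 Hy2. apply Hgg. split_Rabs; lra.
    + apply (incr_sub (fun y => m - d1 < y /\ y < m + d1)); auto. intros y Hy; lra.
    + assert (S (m + dd)).
      { split. lra. exists a, F. split; auto. split; auto. intros y Hy. apply HF1; lra. }
      assert (m + dd <= m) by (apply Hm1; auto). lra. }
  destruct EQ as [a [f [Ha [Hg Hi]]]]. exists f. split.
  intros y Hy. apply Hg. lra. apply (incr_sub (fun y => a < y /\ y < q)); auto. intros y Hy; lra.
Qed.


Definition Inv (n : nat) (f : R -> R) : Prop :=
  (forall y, - INR n - 1 < y < INR n + 1 -> good k I U phi f y) /\
  incr_on (fun y => - INR n - 1 < y < INR n + 1) f /\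
  ((0 < n)%nat -> (forall y, INR n - 1 / 2 <= y < INR n + 1 -> INR n <= f y) /\
                  (forall y, - INR n - 1 < y <= - INR n + 1 / 2 -> f y <= - INR n)).

Lemma Inv0 : exists f, Inv 0 f.
Proof.
  destruct (Qlem (-1) 1 ltac:(lra)) as [g [Hg Hi]]. exists g. split; [|split].
  - intros y Hy. simpl in Hy. apply Hg. lra.
  - apply (incr_sub (fun y => -1 < y < 1)); auto. intros y Hy. simpl in Hy. lra.
  - intros H. lia.
Qed.

Lemma Inv_step n f : Inv n f -> exists f', Inv (S n) f' /\
  (forall y, - INR n - 1 / 4 <= y <= INR n + 1 / 4 -> f' y = f y).
Proof.
  intros [Hg [Hi _]]. set (N := INR n). assert (HN : 0 <= N) by apply pos_INR.
  fold N in Hg, Hi.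
  destruct (Qlem N (N + 2) ltac:(lra)) as [g1 [Hg1 Hi1]].
  destruct (stepB k hk1 I U phi Hcont Hinj (fun y => - N - 1 < y) f g1 (N + 1) N (N + 2) (N + 1 / 4) (N + 1 / 2) (N + 1))
    as [F1 [HF1g [HF1i [HF1e HF1b]]]]; try lra.
  { intros y Hy. lra. }
  { intros y Hy1 Hy2. apply Hg. lra. }
  { apply (incr_sub (fun y => - N - 1 < y < N + 1)); auto. }
  { intros y Hy1 Hy2. apply Hg1. lra. }
  { exact Hi1. }
  destruct (Qlem (- N - 2) (- N) ltac:(lra)) as [g2 [Hg2 Hi2]].
  destruct (stepB_left k hk1 I U phi Hcont Hinj (fun y => y < N + 2) F1 g2 (- N - 1) (- N - 2) (- N) (- N - 1 / 2) (- N - 1 / 4) (N + 1))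
    as [F2 [HF2g [HF2i [HF2e HF2b]]]]; try lra.
  { intros y Hy. lra. }
  { intros y Hy1 Hy2. apply HF1g; auto. }
  { apply (incr_sub (fun y => - N - 1 < y /\ y < N + 2)); auto. intros y Hy; lra. }
  { intros y Hy1 Hy2. apply Hg2. lra. }
  { exact Hi2. }
  exists F2. unfold Inv. rewrite S_INR. fold N. split; [split; [|split]|].
  - intros y Hy. apply HF2g; lra.
  - apply (incr_sub (fun y => y < N + 2 /\ - N - 2 < y)); auto. intros y Hy; lra.
  - intros _. split.
    + intros y Hy. rewrite HF2e by lra. apply HF1b; lra.
    + intros y Hy. pose proof (HF2b y ltac:(lra) ltac:(lra)). lra.
  - intros y Hy. rewrite HF2e by lra. apply HF1e. lra.
Qed.


Definition f0 : R -> R := proj1_sig (constructive_indefinite_description _ Inv0).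
Lemma f0_inv : Inv 0 f0.
Proof. exact (proj2_sig (constructive_indefinite_description _ Inv0)). Qed.
Definition stepf n (f : R -> R) (H : Inv n f) := constructive_indefinite_description _ (Inv_step n f H).
Fixpoint seqf (n : nat) : {f : R -> R | Inv n f} :=
  match n with
  | O => exist _ f0 f0_inv
  | S m => let (f, Hf) := seqf m in exist _ (proj1_sig (stepf m f Hf)) (proj1 (proj2_sig (stepf m f Hf)))
  end.
Definition fs n := proj1_sig (seqf n).
Lemma fs_inv n : Inv n (fs n).
Proof. exact (proj2_sig (seqf n)). Qed.
Lemma fs_agree n y : - INR n - 1 / 4 <= y <= INR n + 1 / 4 -> fs (S n) y = fs n y.
Proof.
  intros Hy. unfold fs. simpl seqf. destruct (seqf n) as [f Hf]. simpl proj1_sig.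
  apply (proj2 (proj2_sig (stepf n f Hf))). auto.
Qed.
Lemma fs_agree_le n m y : (n <= m)%nat -> - INR n - 1 / 4 <= y <= INR n + 1 / 4 -> fs m y = fs n y.
Proof.
  intros Hnm Hy. induction Hnm. auto.
  rewrite fs_agree. auto. pose proof (le_INR _ _ Hnm). lra.
Qed.

Definition Nat (y : R) : nat := Z.to_nat (up (Rabs y)).
Lemma Nat_gt y : Rabs y < INR (Nat y).
Proof.
  unfold Nat. destruct (archimed (Rabs y)) as [H1 _].
  assert (H0 : (0 <= up (Rabs y))%Z). { apply le_IZR. pose proof (Rabs_pos y). simpl. lra. }
  rewrite INR_IZR_INZ, Z2Nat.id by auto. auto.
Qed.

Definition w (y : R) : R := fs (Nat y) y.
Lemma w_eq m y : Rabs y <= INR m -> w y = fs m y.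
Proof.
  intros Hm. unfold w. pose proof (Nat_gt y).
  destruct (le_dec (Nat y) m).
  - symmetry. apply fs_agree_le; auto. split_Rabs; lra.
  - apply fs_agree_le. lia. split_Rabs; lra.
Qed.

Lemma w_good x : good k I U phi w x.
Proof.
  set (m := S (Nat x)). pose proof (Nat_gt x).
  assert (Hm : INR m = INR (Nat x) + 1) by (unfold m; apply S_INR).
  destruct (fs_inv m) as [Hg _].
  apply (good_ext k I U phi (fs m)). apply Hg. split_Rabs; lra.
  exists 1. split. lra. intros y Hy. symmetry. apply w_eq. split_Rabs; lra.
Qed.

Lemma w_incr x y : x < y -> w x < w y.
Proof.
  intros Hxy. set (m := (Nat x + Nat y)%nat). pose proof (Nat_gt x). pose proof (Nat_gt y).
  assert (Hm : INR m = INR (Nat x) + INR (Nat y)) by (unfold m; apply plus_INR).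
  pose proof (pos_INR (Nat x)). pose proof (pos_INR (Nat y)).
  rewrite (w_eq m x), (w_eq m y) by lra.
  destruct (fs_inv m) as [_ [Hi _]]. apply Hi; auto; split_Rabs; lra.
Qed.

Lemma w_cont x : continuous w x.
Proof. apply (good_cont k hk1 I U phi Hcont Hcover). apply w_good. Qed.

Lemma w_big n : INR n + 1 <= w (INR n + 1 / 2).
Proof.
  pose proof (pos_INR n).
  rewrite (w_eq (S n)). 2: rewrite S_INR; split_Rabs; lra.
  destruct (fs_inv (S n)) as [_ [_ Hb]]. rewrite <- S_INR. apply Hb. lia. rewrite S_INR. lra.
Qed.

Lemma w_small n : w (- INR n - 1 / 2) <= - INR n - 1.
Proof.
  pose proof (pos_INR n).
  rewrite (w_eq (S n)). 2: rewrite S_INR; split_Rabs; lra.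
  destruct (fs_inv (S n)) as [_ [_ Hb]]. replace (- INR n - 1) with (- INR (S n)) by (rewrite S_INR; ring).
  apply Hb. lia. rewrite S_INR. lra.
Qed.

Lemma w_surj v : exists x, w x = v.
Proof.
  pose proof (Nat_gt v). set (n := Nat v) in *. pose proof (w_big n). pose proof (w_small n). pose proof (pos_INR n).
  destruct (IVT_gen w (- INR n - 1 / 2) (INR n + 1 / 2) v) as [x [_ Hx]].
  - intros z. apply continuity_pt_filterlim. apply w_cont.
  - rewrite Rmin_left, Rmax_right; split_Rabs; lra.
  - exists x; auto.
Qed.

Definition winv (v : R) : R := proj1_sig (constructive_indefinite_description _ (w_surj v)).
Lemma w_winv v : w (winv v) = v.
Proof. exact (proj2_sig (constructive_indefinite_description _ (w_surj v))). Qed.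
Lemma winv_w x : winv (w x) = x.
Proof.
  pose proof (w_winv (w x)). destruct (Rtotal_order (winv (w x)) x) as [H1|[H1|H1]]; auto;
  apply w_incr in H1; lra.
Qed.
Lemma winv_cont v : continuous winv v.
Proof.
  apply eps_cont. intros e He. set (x0 := winv v).
  pose proof (w_incr x0 (x0 + e) ltac:(lra)). pose proof (w_incr (x0 - e) x0 ltac:(lra)).
  assert (Hv : w x0 = v) by apply w_winv.
  exists (Rmin (w (x0 + e) - v) (v - w (x0 - e))). split. apply Rmin_pos; lra.
  intros u Hu. pose proof (Rmin_l (w (x0 + e) - v) (v - w (x0 - e))). pose proof (Rmin_r (w (x0 + e) - v) (v - w (x0 - e))).
  apply Rabs_def2 in Hu.
  assert (winv u < x0 + e).
  { destruct (Rlt_dec (winv u) (x0 + e)); auto. exfalso.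
    assert (Hw : w (x0 + e) <= w (winv u)). { destruct (Req_dec (winv u) (x0 + e)) as [Heq|Hne]. rewrite Heq; lra. apply Rlt_le, w_incr; lra. }
    rewrite w_winv in Hw. lra. }
  assert (x0 - e < winv u).
  { destruct (Rlt_dec (x0 - e) (winv u)); auto. exfalso.
    assert (Hw : w (winv u) <= w (x0 - e)). { destruct (Req_dec (winv u) (x0 - e)) as [Heq|Hne]. rewrite Heq; lra. apply Rlt_le, w_incr; lra. }
    rewrite w_winv in Hw. lra. }
  split_Rabs; lra.
Qed.


Lemma Ck_of_balls A f : (forall t, A t -> exists e, 0 < e /\ Ck_on k (fun s => Rabs (s - t) < e) f) -> Ck_on k A f.
Proof.
  intros H n Hn x Hx. destruct (H x Hx) as [e [He Hc]]. apply Hc; auto. rewrite Rminus_eq_0, Rabs_R0; auto.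
Qed.

Lemma compat_w i : Ck_compatible k (fun _ => True) w (U i) (phi i).
Proof.
  right. destruct (Hchart i) as [_ [_ [_ [Himg [pinv [Hp1 Hp2]]]]]].
  exists (fun v => phi i (winv v)), (fun t => w (pinv t)). split; [|split; [|split]].
  - intros x _ Hx. rewrite winv_w. auto.
  - intros x _ Hx. rewrite Hp1; auto.
  - apply Ck_of_balls. intros v [x0 [[_ Hx0] Ev]]. subst v.
    destruct (w_good x0 i Hx0) as [G [[d [Hd H1]] [[e [He H2]] H3]]].
    set (s0 := phi i x0) in *.
    assert (HDc : continuous (Derive G) s0).
    { destruct (H2 1%nat hk1 s0) as [_ Hc]. rewrite Rminus_eq_0, Rabs_R0; auto. exact Hc. }
    destruct (cont_eps (Derive G) s0 HDc (Rabs (Derive G s0)) (Rabs_pos_lt _ H3)) as [e1 [He1 HD]].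
    set (e' := Rmin e e1).
    assert (He' : 0 < e') by (apply Rmin_pos; auto).
    assert (He'1 : e' <= e) by apply Rmin_l. assert (He'2 : e' <= e1) by apply Rmin_r.
    assert (Hgc : continuous (fun v => phi i (winv v)) (w x0)).
    { apply cont_comp. apply winv_cont. rewrite winv_w. apply Hcont; auto. }
    destruct (cont_eps winv (w x0) (winv_cont (w x0)) d Hd) as [d1 [Hd1 Hc1]].
    destruct (cont_eps _ (w x0) Hgc e' He') as [d2 [Hd2 Hc2]].
    rewrite winv_w in Hc1, Hc2. fold s0 in Hc2.
    exists (Rmin d1 d2). split. apply Rmin_pos; auto.
    assert (Hm1 : Rmin d1 d2 <= d1) by apply Rmin_l. assert (Hm2 : Rmin d1 d2 <= d2) by apply Rmin_r.
    apply (Ck_inverse k (fun s => Rabs (s - s0) < e') (fun t => Rabs (t - w x0) < Rmin d1 d2) G (fun v => phi i (winv v)) hk1 (open_ball _ _) (open_ball _ _)).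
    + intros t Ht. split. apply Hc2. lra.
      destruct (H1 (winv t)) as [_ E]. apply Hc1. lra. rewrite E. apply w_winv.
    + intros t Ht. apply cont_comp. apply winv_cont. apply Hcont.
      apply (H1 (winv t)). apply Hc1. lra.
    + apply (Ck_on_mono k (fun s => Rabs (s - s0) < e)); auto. intros s Hs; lra.
    + intros s Hs. specialize (HD s ltac:(lra)). intro Hz. rewrite Hz in HD.
      replace (0 - Derive G s0) with (- Derive G s0) in HD by ring. rewrite Rabs_Ropp in HD. lra.
  - apply Ck_of_balls. intros t [x0 [[_ Hx0] Et]]. subst t.
    destruct (w_good x0 i Hx0) as [G [[d [Hd H1]] [[e [He H2]] H3]]].
    set (s0 := phi i x0) in *.
    assert (Hs0 : img (phi i) (U i) s0) by (exists x0; split; auto).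
    destruct (proj1 (open_eps _) Himg s0 Hs0) as [e0 [He0 Hb]].
    destruct (cont_eps pinv s0 (Hp2 s0 Hs0) d Hd) as [d1 [Hd1 Hc1]].
    assert (Hpx : pinv s0 = x0) by (unfold s0; apply Hp1; auto). rewrite Hpx in Hc1.
    set (r := Rmin e (Rmin e0 d1)).
    assert (Hr : 0 < r) by (apply Rmin_pos; auto; apply Rmin_pos; auto).
    assert (Hr1 : r <= e) by apply Rmin_l.
    assert (Hr2 : r <= e0) by (eapply Rle_trans; [apply Rmin_r|apply Rmin_l]).
    assert (Hr3 : r <= d1) by (eapply Rle_trans; [apply Rmin_r|apply Rmin_r]).
    exists r. split; auto.
    apply (Ck_on_ext k _ G). apply open_ball.
    + intros t Ht. destruct (Hb t ltac:(lra)) as [z [Uz Ez]].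
      assert (Hz : pinv t = z) by (rewrite <- Ez; apply Hp1; auto).
      specialize (Hc1 t ltac:(lra)). rewrite Hz in Hc1 |- *.
      destruct (H1 z Hc1) as [_ E]. rewrite <- E, Ez. auto.
    + apply (Ck_on_mono k (fun s => Rabs (s - s0) < e)); auto. intros s Hs; lra.
Qed.

Lemma compat_w' i : Ck_compatible k (U i) (phi i) (fun _ => True) w.
Proof.
  destruct (compat_w i) as [Hd|[g [h [E1 [E2 [C1 C2]]]]]].
  - left. intros x [H1 H2]. apply (Hd x). split; auto.
  - right. exists h, g. split; [|split; [|split]].
    + intros x Hx _. apply E2; auto.
    + intros x Hx _. apply E1; auto.
    + eapply Ck_on_mono; [|exact C2]. intros t [z [[Hz1 Hz2] Ez]]. exists z. split; auto. split; auto.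
    + eapply Ck_on_mono; [|exact C1]. intros t [z [[Hz1 Hz2] Ez]]. exists z. split; auto. split; auto.
Qed.

Theorem core : exists w0 : R -> R, homeomorphism w0 /\
  forall i, Ck_compatible k (fun _ => True) w0 (U i) (phi i) /\ Ck_compatible k (U i) (phi i) (fun _ => True) w0.
Proof.
  exists w. split.
  - split. apply w_cont. exists winv. split. apply winv_w. split. apply w_winv. apply winv_cont.
  - intros i. split. apply compat_w. apply compat_w'.
Qed.

End Atlas.

Lemma compat_restrict k A f B g A' B' : Ck_compatible k A f B g ->
  (forall x, A' x -> A x) -> (forall x, B' x -> B x) -> Ck_compatible k A' f B' g.
Proof.
  intros [Hd|[g1 [h1 [E1 [E2 [C1 C2]]]]]] HA HB.
  - left. intros x [H1 H2]. apply (Hd x). split; auto.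
  - right. exists g1, h1. split; [|split; [|split]].
    + intros x H1 H2. apply E1; auto.
    + intros x H1 H2. apply E2; auto.
    + eapply Ck_on_mono; [|exact C1]. intros t [z [[Hz1 Hz2] Ez]]. exists z. split; auto. split; auto.
    + eapply Ck_on_mono; [|exact C2]. intros t [z [[Hz1 Hz2] Ez]]. exists z. split; auto. split; auto.
Qed.

Lemma compat_id k A B (w : R -> R) : Ck_compatible k A w B w.
Proof.
  right. exists (fun x => x), (fun x => x). split; [|split; [|split]]; auto; apply Ck_id.
Qed.

Theorem theorem4p5 (k : smoothness) (hk : valid_smoothness k) :
  (forall (I : Type) (U : I -> R -> Prop) (phi : I -> R -> R),
     Ck_atlas k I U phi ->
     exists (V : Z -> R -> Prop) (psi : Z -> R -> R),
       chain_like k V psi /\ atlases_compatible k I U phi Z V psi) /\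
  (forall (V : Z -> R -> Prop) (psi : Z -> R -> R),
     chain_like k V psi ->
     exists w : R -> R, homeomorphism w /\
       forall i : Z, Ck_compatible k (fun _ => True) w (V i) (psi i) /\
                     Ck_compatible k (V i) (psi i) (fun _ => True) w).
Proof.
  split.
  - intros I U phi HA.
    destruct (core k hk I U phi HA) as [w0 [[Hwc [wi [H1 [H2 H3]]]] Hcomp]].
    assert (Hwinj : forall x y, w0 x = w0 y -> x = y).
    { intros x y E. rewrite <- (H1 x), <- (H1 y), E. auto. }
    assert (Hpre : forall a b, ropen (fun x => a < w0 x < b)).
    { intros a b. apply open_eps. intros x Hx.
      destruct (cont_eps w0 x (Hwc x) (Rmin (w0 x - a) (b - w0 x))) as [d [Hd Hc]].
      apply Rmin_pos; lra.
      exists d. split; auto. intros y Hy. specialize (Hc y Hy).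
      pose proof (Rmin_l (w0 x - a) (b - w0 x)). pose proof (Rmin_r (w0 x - a) (b - w0 x)).
      split_Rabs; lra. }
    assert (Himg : forall a b y, img w0 (fun x => a < w0 x < b) y <-> a < y < b).
    { intros a b y. split.
      - intros [x [Hx E]]. subst. auto.
      - intros Hy. exists (wi y). rewrite H2. auto. }
    set (V := fun (n : Z) x => IZR n < w0 x < IZR n + 2).
    exists V, (fun _ => w0).
    assert (Hchart : forall n, is_chart (V n) w0).
    { intros n. split; [|split; [|split; [|split]]].
      - apply Hpre.
      - intros x y _ _ E. apply Hwinj; auto.
      - intros x _. apply Hwc.
      - apply open_eps. intros t Ht. apply Himg in Ht.
        exists (Rmin (t - IZR n) (IZR n + 2 - t)). split. apply Rmin_pos; lra.
        intros y Hy. apply Himg.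
        pose proof (Rmin_l (t - IZR n) (IZR n + 2 - t)). pose proof (Rmin_r (t - IZR n) (IZR n + 2 - t)).
        split_Rabs; lra.
      - exists wi. split. intros; apply H1. intros; apply H3. }
    split; [split; [|split]|].
    + split; [|split].
      * exact Hchart.
      * intros i j. apply compat_id.
      * intros x. exists (up (w0 x) - 2)%Z. unfold V. rewrite minus_IZR.
        destruct (archimed (w0 x)). simpl. lra.
    + intros n. split. apply compat_id.
      exists (IZR n), (IZR n + 1), (IZR n + 2), (IZR n + 3).
      split; [lra|split; [lra|split; [lra|split; [|split; [|split]]]]].
      * intros y. unfold V. rewrite Himg. unfold open_itv. tauto.
      * intros y. unfold open_itv. split.
        -- intros [x [[Hx1 Hx2] E]]. subst y. unfold V in *. rewrite plus_IZR in Hx2. simpl in Hx2. lra.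
        -- intros Hy. exists (wi y). unfold V, inter. rewrite plus_IZR. simpl. rewrite H2. split; [split; lra|auto].
      * intros y. unfold open_itv. split.
        -- intros [x [[Hx1 Hx2] E]]. subst y. unfold V in *. rewrite plus_IZR in Hx2. simpl in Hx2. lra.
        -- intros Hy. exists (wi y). unfold V, inter. rewrite plus_IZR. simpl. rewrite H2. split; [split; lra|auto].
      * intros y. unfold V. rewrite Himg. unfold open_itv. rewrite plus_IZR. simpl. split; intros; lra.
    + intros i j Hji Hji1 x [Hj [Hi Hi1]]. unfold V in *. rewrite plus_IZR in Hi1. simpl in Hi1.
      assert (A1 : IZR j < IZR (i + 2)) by (rewrite plus_IZR; simpl; lra).
      assert (A2 : IZR (i - 1) < IZR j) by (rewrite minus_IZR; simpl; lra).
      apply lt_IZR in A1. apply lt_IZR in A2. lia.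
    + intros i j. destruct (Hcomp i) as [C1 C2]. split.
      * apply (compat_restrict k (U i) (phi i) (fun _ => True) w0); auto.
      * apply (compat_restrict k (fun _ => True) w0 (U i) (phi i)); auto.
  - intros V psi [HA _]. apply (core k hk Z V psi HA).
Qed.
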